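(* Let $p>2$, let $I\subset\mathbb{R}$ be an interval and let $f\in C^\infty_c(\mathbb{R}^2)$. Then $$\sum_{J\in\mathcal D}|J|^{-\frac p{20}}\|f\mathbf 1_{I\times J}\|^p_{L^{20/11}_{x,y}}\lesssim_p\|f\mathbf 1_{I\times\mathbb{R}}\|^p_{L^{20/11}_xL^2_y},$$ where $\|h\|_{L^{20/11}_xL^2_y}=\big(\int_{\mathbb{R}}\|h(x,\cdot)\|_{L^2(\mathbb{R})}^{20/11}dx\big)^{11/20}$, and the implicit constant depends only on $p$.
   Context: $\mathcal D$ denotes the collection of dyadic intervals $\{[2^k(n-1),2^k(n+1)]:k,n\in\mathbb{Z}\}$, and $|J|$ is the length of $J$. *)

(* Defs.v *)
From Stdlib Require Import Reals Lra ZArith List ClassicalEpsilon.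
Open Scope R_scope.

(* Nonnegative real power, with the convention 0^a = 0 (used for a > 0). *)
Definition rpow (x a : R) : R :=
  if Rle_dec x 0 then 0 else Rpower x a.

Definition ind (S : R -> Prop) (x : R) : R :=
  if excluded_middle_informative (S x) then 1 else 0.

Definition is_interval (I : R -> Prop) : Prop :=
  forall x y z, I x -> I z -> x <= y -> y <= z -> I y.

(* Riemann integral over [a,b] (value is independent of the integrability proof;
   unspecified when f is not Riemann integrable). *)
Definition RInt (f : R -> R) (a b : R) : R :=
  epsilon (inhabits 0)
    (fun v => exists pr : Riemann_integrable f a b, RiemannInt pr = v).

(* Integral over R of a function with bounded support: the eventually
   constant value of the integral over [-M, M]. *)
Definition IntR (h : R -> R) : R :=
  epsilon (inhabits 0)
    (fun v => exists M, forall M', M <= M' -> RInt h (- M') M' = v).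

Definition continuous2 (g : R -> R -> R) : Prop :=
  forall x y eps, 0 < eps -> exists delta, 0 < delta /\
    forall x' y', Rabs (x' - x) < delta -> Rabs (y' - y) < delta ->
      Rabs (g x' y' - g x y) < eps.

(* C^infinity on R^2: there is a family D of functions indexed by words in
   {x-derivative (true), y-derivative (false)}, with D nil = g, such that
   each D s is jointly continuous and its partial derivatives exist
   everywhere and are given by D (true :: s), D (false :: s). *)
Definition smooth2 (g : R -> R -> R) : Prop :=
  exists D : list bool -> R -> R -> R,
    D nil = g /\
    forall s, continuous2 (D s) /\
      (forall x y, derivable_pt_lim (fun t => D s t y) x (D (true :: s) x y)) /\
      (forall x y, derivable_pt_lim (fun t => D s x t) y (D (false :: s) x y)).

Definition compact_support2 (g : R -> R -> R) : Prop :=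
  exists M, forall x y, M < Rabs x \/ M < Rabs y -> g x y = 0.

(* A complex-valued f = u + i v on R^2; its modulus. *)
Definition cabs2 (u v : R -> R -> R) (x y : R) : R :=
  sqrt (u x y ^ 2 + v x y ^ 2).

Definition dyad (k n : Z) (y : R) : Prop :=
  powerRZ 2 k * (IZR n - 1) <= y <= powerRZ 2 k * (IZR n + 1).
Definition dyad_len (k : Z) : R := 2 * powerRZ 2 k.

Definition q0 : R := 20 / 11.

Definition norm_IJ (u v : R -> R -> R) (I J : R -> Prop) : R :=
  rpow (IntR (fun x => IntR (fun y =>
          ind I x * ind J y * rpow (cabs2 u v x y) q0))) (1 / q0).

Definition norm_mixed (u v : R -> R -> R) (I : R -> Prop) : R :=
  rpow (IntR (fun x =>
          rpow (rpow (IntR (fun y => ind I x * rpow (cabs2 u v x y) 2)) (1 / 2))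
               q0)) (1 / q0).

Definition dyad_term (p : R) (u v : R -> R -> R) (I : R -> Prop) (kn : Z * Z) : R :=
  rpow (dyad_len (fst kn)) (- p / 20) * rpow (norm_IJ u v I (dyad (fst kn) (snd kn))) p.

(* Main.v *)
Require Import Defs.
From Stdlib Require Import Reals ZArith List.
From Stdlib Require Import Lra Lia ClassicalEpsilon Classical FunctionalExtensionality Psatz RList RiemannInt_SF RiemannInt FinFun.
Require Import Defs.
Open Scope R_scope.

Lemma RI_zero_open f a b : a <= b -> (forall x, a < x < b -> f x = 0) -> Riemann_integrable f a b.
Proof.
  intros Hab Hf eps.
  assert (Hs : IsStepFun f a b).
  { exists (a :: b :: nil). exists (0 :: nil).
    unfold adapted_couple; repeat split.
    - unfold ordered_Rlist; intros i Hi; simpl in Hi; inversion Hi; [simpl; lra | lia].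
    - simpl; unfold Rmin; destruct (Rle_dec a b); lra.
    - simpl; unfold Rmax; destruct (Rle_dec a b); lra.
    - unfold constant_D_eq, open_interval; intros i Hi x Hx; simpl in Hi.
      destruct i; [simpl in Hx; apply Hf; exact Hx | simpl in Hi; lia]. }
  exists (mkStepFun Hs). exists (mkStepFun (StepFun_P4 a b 0)).
  split.
  - intros t _. simpl. unfold fct_cte. rewrite Rminus_diag, Rabs_R0; lra.
  - rewrite StepFun_P18. rewrite Rmult_0_l, Rabs_R0. apply cond_pos.
Qed.
Arguments RI_zero_open {f a b}.

Lemma RI_open f g a b : a <= b -> Riemann_integrable g a b ->
  (forall x, a < x < b -> f x = g x) -> Riemann_integrable f a b.
Proof.
  intros Hab Hg Hfg.
  apply Riemann_integrable_ext with (fun x => g x + 1 * (f x - g x)).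
  { intros; ring. }
  apply RiemannInt_P10; [exact Hg|].
  apply RI_zero_open; [exact Hab|]. intros x Hx; rewrite Hfg; [ring|exact Hx].
Qed.
Arguments RI_open {f g a b}.

Lemma RInt_val f a b (pr : Riemann_integrable f a b) : RInt f a b = RiemannInt pr.
Proof.
  unfold RInt.
  match goal with |- epsilon ?i ?P = _ => assert (H := epsilon_spec i P) end.
  destruct H as [pr' Hpr']. { exists (RiemannInt pr); exists pr; reflexivity. }
  rewrite <- Hpr'. apply RiemannInt_P5.
Qed.
Arguments RInt_val {f a b}.

Lemma IntR_val h v : (exists M, forall M', M <= M' -> RInt h (- M') M' = v) -> IntR h = v.
Proof.
  intros [M HM]. unfold IntR.
  match goal with |- epsilon ?i ?P = _ => assert (H := epsilon_spec i P) end.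
  destruct H as [M2 HM2]. { exists v, M; exact HM. }
  rewrite <- (HM2 (Rmax M M2)) by apply Rmax_r.
  apply HM; apply Rmax_l.
Qed.

Lemma RInt_zero_fun f a b : a <= b -> (forall x, a < x < b -> f x = 0) -> RInt f a b = 0.
Proof.
  intros Hab Hf. rewrite (RInt_val (RI_zero_open Hab Hf)).
  rewrite (RiemannInt_P18 (RI_zero_open Hab Hf) (RiemannInt_P14 a b 0) Hab).
  - rewrite RiemannInt_P15; ring.
  - intros x Hx; unfold fct_cte; apply Hf; exact Hx.
Qed.
Arguments RInt_zero_fun {f a b}.

Lemma RInt_chasles f a b c : Riemann_integrable f a b -> Riemann_integrable f b c ->
  RInt f a b + RInt f b c = RInt f a c.
Proof.
  intros p1 p2. rewrite (RInt_val p1), (RInt_val p2), (RInt_val (RiemannInt_P24 p1 p2)).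
  apply RiemannInt_P26.
Qed.
Arguments RInt_chasles {f a b c}.

Lemma RInt_lin f g l a b : Riemann_integrable f a b -> Riemann_integrable g a b ->
  RInt (fun x => f x + l * g x) a b = RInt f a b + l * RInt g a b.
Proof.
  intros p1 p2. rewrite (RInt_val p1), (RInt_val p2), (RInt_val (RiemannInt_P10 l p1 p2)).
  apply RiemannInt_P13.
Qed.
Arguments RInt_lin {f g} l {a b}.

Lemma RInt_le f g a b : a <= b -> Riemann_integrable f a b -> Riemann_integrable g a b ->
  (forall x, a < x < b -> f x <= g x) -> RInt f a b <= RInt g a b.
Proof.
  intros Hab p1 p2 H. rewrite (RInt_val p1), (RInt_val p2). apply RiemannInt_P19; auto.
Qed.
Arguments RInt_le {f g a b}.

Lemma RInt_ext_open f g a b : a <= b -> Riemann_integrable g a b ->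
  (forall x, a < x < b -> f x = g x) -> RInt f a b = RInt g a b.
Proof.
  intros Hab p2 H. assert (p1 := RI_open Hab p2 H).
  rewrite (RInt_val p1), (RInt_val p2). apply RiemannInt_P18; auto.
Qed.
Arguments RInt_ext_open {f g a b}.

Lemma RInt_const c a b : RInt (fun _ => c) a b = c * (b - a).
Proof.
  change (RInt (fct_cte c) a b = c * (b - a)).
  rewrite (RInt_val (RiemannInt_P14 a b c)). apply RiemannInt_P15.
Qed.

Lemma RInt_abs f a b : a <= b -> Riemann_integrable f a b ->
  Rabs (RInt f a b) <= RInt (fun x => Rabs (f x)) a b.
Proof.
  intros Hab p. rewrite (RInt_val p), (RInt_val (RiemannInt_P16 p)). apply RiemannInt_P17; auto.
Qed.
Arguments RInt_abs {f a b}.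

Definition supp (F : R -> R) := exists K, 0 <= K /\ forall x, K <= Rabs x -> F x = 0.
Definition intg (F : R -> R) := forall a b, a <= b -> Riemann_integrable F a b.

Lemma IntR_supp F K : 0 <= K -> (forall x, K <= Rabs x -> F x = 0) -> intg F ->
  IntR F = RInt F (- K) K.
Proof.
  intros HK HF Hi. apply IntR_val. exists K. intros M' HM'.
  assert (p1 : Riemann_integrable F (- M') (- K)) by (apply Hi; lra).
  assert (p2 : Riemann_integrable F (- K) K) by (apply Hi; lra).
  assert (p3 : Riemann_integrable F K M') by (apply Hi; lra).
  rewrite <- (RInt_chasles (RiemannInt_P24 p1 p2) p3).
  rewrite <- (RInt_chasles p1 p2).
  rewrite (@RInt_zero_fun F (-M') (-K)), (@RInt_zero_fun F K M'); try lra.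
  - intros x Hx; apply HF. rewrite Rabs_right; lra.
  - intros x Hx; apply HF. rewrite Rabs_left; lra.
Qed.
Arguments IntR_supp {F} K.

Lemma supp_common F G : supp F -> supp G -> exists K, 0 <= K /\
  (forall x, K <= Rabs x -> F x = 0) /\ (forall x, K <= Rabs x -> G x = 0).
Proof.
  intros [K1 [H1 HF]] [K2 [H2 HG]]. exists (Rmax K1 K2). repeat split.
  - apply Rle_trans with K1; [lra | apply Rmax_l].
  - intros x Hx; apply HF; apply Rle_trans with (Rmax K1 K2); [apply Rmax_l | lra].
  - intros x Hx; apply HG; apply Rle_trans with (Rmax K1 K2); [apply Rmax_r | lra].
Qed.
Arguments supp_common {F G}.

Lemma IntR_lin F G l : supp F -> supp G -> intg F -> intg G ->
  IntR (fun x => F x + l * G x) = IntR F + l * IntR G.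
Proof.
  intros sF sG iF iG. destruct (supp_common sF sG) as [K [HK [HF HG]]].
  rewrite (IntR_supp (F:=F) K HK HF iF), (IntR_supp (F:=G) K HK HG iG).
  rewrite (IntR_supp (F:=fun x => F x + l * G x) K HK).
  - apply RInt_lin; [apply iF | apply iG]; lra.
  - intros x Hx; rewrite HF, HG; auto; ring.
  - intros a b Hab; apply RiemannInt_P10; auto.
Qed.
Arguments IntR_lin {F G} l.

Lemma IntR_le F G : supp F -> supp G -> intg F -> intg G ->
  (forall x, F x <= G x) -> IntR F <= IntR G.
Proof.
  intros sF sG iF iG H. destruct (supp_common sF sG) as [K [HK [HF HG]]].
  rewrite (IntR_supp (F:=F) K HK HF iF), (IntR_supp (F:=G) K HK HG iG).
  apply RInt_le; [lra | apply iF; lra | apply iG; lra | intros; apply H].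
Qed.
Arguments IntR_le {F G}.

Lemma IntR_zero : IntR (fun _ => 0) = 0.
Proof.
  apply IntR_val. exists 0. intros M' _. rewrite RInt_const. ring.
Qed.

Lemma supp_lin F G l : supp F -> supp G -> supp (fun x => F x + l * G x).
Proof.
  intros sF sG. destruct (supp_common sF sG) as [K [HK [HF HG]]].
  exists K; split; auto. intros x Hx; rewrite HF, HG; auto; ring.
Qed.
Arguments supp_lin {F G} l.

Lemma intg_lin F G l : intg F -> intg G -> intg (fun x => F x + l * G x).
Proof. intros iF iG a b Hab; apply RiemannInt_P10; auto. Qed.
Arguments intg_lin {F G} l.

Lemma supp_zero : supp (fun _ => 0).
Proof. exists 0; split; [lra | auto]. Qed.
Lemma intg_zero : intg (fun _ => 0).
Proof. intros a b _; apply (RiemannInt_P14 a b 0). Qed.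

Lemma IntR_scal F l : supp F -> intg F -> IntR (fun x => l * F x) = l * IntR F.
Proof.
  intros sF iF.
  assert (E : (fun x => l * F x) = (fun x => (fun _ => 0) x + l * F x)).
  { apply functional_extensionality; intros; ring. }
  rewrite E, IntR_lin; auto using supp_zero, intg_zero. rewrite IntR_zero; ring.
Qed.
Arguments IntR_scal {F} l.

Lemma supp_scal F l : supp F -> supp (fun x => l * F x).
Proof. intros [K [HK H]]; exists K; split; auto; intros; rewrite H; auto; ring. Qed.
Arguments supp_scal {F} l.
Lemma intg_scal F l : intg F -> intg (fun x => l * F x).
Proof. intros iF a b Hab; apply Riemann_integrable_scal; auto. Qed.
Arguments intg_scal {F} l.

Lemma IntR_nonneg F : supp F -> intg F -> (forall x, 0 <= F x) -> 0 <= IntR F.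
Proof.
  intros sF iF H. rewrite <- IntR_zero. apply IntR_le; auto using supp_zero, intg_zero.
Qed.
Arguments IntR_nonneg {F}.

Lemma ind_in I x : I x -> ind I x = 1.
Proof. intros H; unfold ind; destruct (excluded_middle_informative (I x)); tauto. Qed.
Lemma ind_out I x : ~ I x -> ind I x = 0.
Proof. intros H; unfold ind; destruct (excluded_middle_informative (I x)); tauto. Qed.

Lemma not_ub_ex (S : R -> Prop) x : ~ is_upper_bound S x -> exists y, S y /\ x < y.
Proof.
  intros H. apply NNPP; intro H'. apply H. intros y Hy.
  destruct (Rle_dec y x); auto. exfalso; apply H'; exists y; split; auto; lra.
Qed.

Lemma ind_int I g a b : is_interval I -> (forall x, continuity_pt g x) -> a <= b ->
  Riemann_integrable (fun x => ind I x * g x) a b.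
Proof.
  intros HI Hg Hab.
  destruct (excluded_middle_informative (exists x, a <= x <= b /\ I x)) as [Hne|Hem].
  2:{ apply RI_zero_open; auto. intros x Hx. rewrite ind_out; [ring|].
      intro HIx; apply Hem; exists x; split; auto; lra. }
  set (S := fun x => a <= x <= b /\ I x).
  assert (bS : bound S) by (exists b; intros x [Hx _]; lra).
  destruct (completeness S bS Hne) as [be [Hbe1 Hbe2]].
  set (S' := fun x => S (- x)).
  assert (bS' : bound S') by (exists (- a); intros x [Hx _]; lra).
  assert (neS' : exists x, S' x).
  { destruct Hne as [x Hx]; exists (- x); unfold S'; rewrite Ropp_involutive; exact Hx. }
  destruct (completeness S' bS' neS') as [ga [Hga1 Hga2]].
  set (al := - ga).
  assert (Hs : forall s, S s -> al <= s <= be).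
  { intros s Hs; split; [| apply Hbe1; auto].
    unfold al. assert (- s <= ga); [apply Hga1; unfold S'; rewrite Ropp_involutive; auto | lra]. }
  assert (Hs0 : al <= be) by (destruct Hne as [s0 Hs0]; destruct (Hs s0 Hs0); lra).
  assert (Hab1 : a <= al).
  { unfold al. assert (ga <= - a); [apply Hga2; intros x [Hx _]; lra | lra]. }
  assert (Hab2 : be <= b) by (apply Hbe2; intros x [Hx _]; lra).
  assert (p1 : Riemann_integrable (fun x => ind I x * g x) a al).
  { apply RI_zero_open; auto. intros x Hx. rewrite ind_out; [ring|].
    intro HIx. assert (S x) by (split; auto; lra). specialize (Hs x H); lra. }
  assert (p3 : Riemann_integrable (fun x => ind I x * g x) be b).
  { apply RI_zero_open; auto. intros x Hx. rewrite ind_out; [ring|].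
    intro HIx. assert (S x) by (split; auto; lra). specialize (Hs x H); lra. }
  assert (p2 : Riemann_integrable (fun x => ind I x * g x) al be).
  { apply (@RI_open _ g); [lra | |].
    - apply continuity_implies_RiemannInt; [lra | intros; apply Hg].
    - intros x Hx. rewrite ind_in; [ring|].
      destruct (not_ub_ex S x) as [s2 [Hs2 Hxs2]].
      { intro Hub; specialize (Hbe2 x Hub); lra. }
      destruct (not_ub_ex S' (- x)) as [t [Ht Hxt]].
      { intro Hub; specialize (Hga2 (- x) Hub); unfold al in Hx; lra. }
      apply HI with (- t) s2; [apply Ht | apply Hs2 | lra | lra]. }
  exact (RiemannInt_P24 (RiemannInt_P24 p1 p2) p3).
Qed.

Lemma exp_le_mono x y : x <= y -> exp x <= exp y.
Proof. intros [H|H]; [left; apply exp_increasing; auto | subst; lra]. Qed.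

Lemma rpow_le0 x a : x <= 0 -> rpow x a = 0.
Proof. intros H; unfold rpow; destruct (Rle_dec x 0); [auto | lra]. Qed.
Lemma rpow_pos x a : 0 < x -> rpow x a = Rpower x a.
Proof. intros H; unfold rpow; destruct (Rle_dec x 0); [lra | auto]. Qed.
Lemma rpow_0 a : rpow 0 a = 0.
Proof. apply rpow_le0; lra. Qed.
Lemma Rpower_gt0 x a : 0 < Rpower x a.
Proof. unfold Rpower; apply exp_pos. Qed.
Lemma rpow_gt0 x a : 0 < x -> 0 < rpow x a.
Proof. intros H; rewrite rpow_pos; auto; apply Rpower_gt0. Qed.
Lemma rpow_ge0 x a : 0 <= rpow x a.
Proof. unfold rpow; destruct (Rle_dec x 0); [lra | left; apply Rpower_gt0]. Qed.
Lemma rpow_1 x : 0 <= x -> rpow x 1 = x.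
Proof.
  intros [H|H]; [rewrite rpow_pos; auto; apply Rpower_1; auto | subst; apply rpow_0].
Qed.
Lemma rpow_mult x a b : 0 <= x -> rpow (rpow x a) b = rpow x (a * b).
Proof.
  intros [H|H].
  - rewrite (rpow_pos x a), (rpow_pos x); auto. rewrite rpow_pos; [apply Rpower_mult|apply Rpower_gt0].
  - subst; rewrite !rpow_0; auto.
Qed.
Lemma rpow_mul x y a : 0 <= x -> 0 <= y -> rpow (x * y) a = rpow x a * rpow y a.
Proof.
  intros [Hx|Hx] [Hy|Hy].
  - rewrite !rpow_pos; auto; [| apply Rmult_lt_0_compat; auto]. symmetry; apply Rpower_mult_distr; auto.
  - subst; rewrite Rmult_0_r, rpow_0; ring.
  - subst; rewrite Rmult_0_l, rpow_0; ring.
  - subst; rewrite Rmult_0_l, rpow_0; ring.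
Qed.
Lemma rpow_inv x a : 0 < x -> rpow (/ x) a = / rpow x a.
Proof.
  intros H. rewrite !rpow_pos; auto; [| apply Rinv_0_lt_compat; auto].
  unfold Rpower. rewrite ln_Rinv; auto. rewrite <- exp_Ropp. f_equal; ring.
Qed.
Lemma rpow_plus x a b : 0 < x -> rpow x (a + b) = rpow x a * rpow x b.
Proof. intros H; rewrite !rpow_pos; auto; apply Rpower_plus. Qed.
Lemma rpow_le x y a : 0 <= a -> 0 <= x <= y -> rpow x a <= rpow y a.
Proof.
  intros Ha [[Hx|Hx] Hxy].
  - rewrite !rpow_pos; try lra. apply Rle_Rpower_l; auto; lra.
  - subst; rewrite rpow_0; apply rpow_ge0.
Qed.
Lemma rpow_lt x y a : 0 < a -> 0 <= x < y -> rpow x a < rpow y a.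
Proof.
  intros Ha [[Hx|Hx] Hxy].
  - rewrite !rpow_pos; try lra. apply Rlt_Rpower_l; auto; lra.
  - subst; rewrite rpow_0; apply rpow_gt0; auto.
Qed.
Lemma rpow_le_inv x y a : 0 < a -> 0 <= x -> 0 <= y -> rpow x a <= rpow y a -> x <= y.
Proof.
  intros Ha Hx Hy H. destruct (Rle_dec x y); auto.
  assert (rpow y a < rpow x a).
  { apply rpow_lt; auto; lra. }
  lra.
Qed.
Lemma rpow_exp_le x a b : 0 <= x <= 1 -> a <= b -> rpow x b <= rpow x a.
Proof.
  intros [[Hx|Hx] H1] Hab.
  - rewrite !rpow_pos; auto. unfold Rpower. apply exp_le_mono.
    assert (ln x <= 0).
    { destruct H1 as [H1|H1]; [left; rewrite <- ln_1; apply ln_increasing; auto | subst; rewrite ln_1; lra]. }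
    nra.
  - subst; rewrite !rpow_0; lra.
Qed.
Lemma rpow_inj_id x a : 0 < a -> 0 <= x -> rpow (rpow x a) (/ a) = x.
Proof.
  intros Ha Hx. rewrite rpow_mult; auto. rewrite Rinv_r; [apply rpow_1; auto | lra].
Qed.

Lemma amgm r x y : 0 < r < 1 -> 0 <= x -> 0 <= y ->
  rpow x r * rpow y (1 - r) <= r * x + (1 - r) * y.
Proof.
  intros Hr [Hx|Hx] [Hy|Hy].
  - set (m := r * x + (1 - r) * y).
    assert (Hm : 0 < m) by (unfold m; nra).
    rewrite !rpow_pos; auto. unfold Rpower. rewrite <- exp_plus.
    assert (H1 := exp_ineq1_le (ln x - ln m)).
    assert (H2 := exp_ineq1_le (ln y - ln m)).
    unfold Rminus in H1, H2. rewrite exp_plus, exp_Ropp, exp_ln, exp_ln in H1, H2; auto.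
    assert (r * (x / m) + (1 - r) * (y / m) = 1) by (unfold m in *; field; lra).
    assert (r * ln x + (1 - r) * ln y <= ln m).
    { unfold Rdiv in *. nra. }
    apply Rle_trans with (exp (ln m)); [apply exp_le_mono; lra | rewrite exp_ln; lra].
  - subst. rewrite rpow_0. assert (0 < rpow x r) by (apply rpow_gt0; auto). nra.
  - subst. rewrite rpow_0. nra.
  - subst. rewrite rpow_0. lra.
Qed.

Lemma concave_comb r l U V : 0 < r < 1 -> 0 <= l <= 1 -> 0 <= U -> 0 <= V ->
  l * rpow U r + (1 - l) * rpow V r <= rpow (l * U + (1 - l) * V) r.
Proof.
  intros Hr Hl HU HV. set (w := l * U + (1 - l) * V).
  assert (Hw : 0 <= w) by (unfold w; nra).
  destruct Hw as [Hw|Hw].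
  - assert (A1 := amgm _ _ _ Hr HU (Rlt_le _ _ Hw)).
    assert (A2 := amgm _ _ _ Hr HV (Rlt_le _ _ Hw)).
    assert (Hwr : rpow w r * rpow w (1 - r) = w).
    { rewrite <- rpow_plus; auto. replace (r + (1 - r)) with 1 by ring. apply rpow_1; lra. }
    assert (Hp : 0 < rpow w (1 - r)) by (apply rpow_gt0; auto).
    apply Rmult_le_reg_r with (rpow w (1 - r)); auto. rewrite Hwr.
    assert (0 <= rpow U r) by apply rpow_ge0. assert (0 <= rpow V r) by apply rpow_ge0.
    unfold w in *. nra.
  - assert (l * U = 0) by (unfold w in Hw; nra). assert ((1 - l) * V = 0) by (unfold w in Hw; nra).
    assert (E1 : l * rpow U r = 0).
    { destruct (Rmult_integral _ _ H) as [H'|H']; [rewrite H'; ring | rewrite H', rpow_0; ring]. }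
    assert (E2 : (1 - l) * rpow V r = 0).
    { destruct (Rmult_integral _ _ H0) as [H'|H']; [rewrite H'; ring | rewrite H', rpow_0; ring]. }
    rewrite E1, E2. rewrite Rplus_0_r. apply rpow_ge0.
Qed.

Lemma bernoulli s z : 1 <= s -> 0 <= z -> 1 + s * z <= rpow (1 + z) s.
Proof.
  intros Hs Hz. destruct Hs as [Hs|Hs].
  2:{ subst. rewrite rpow_1; lra. }
  assert (Hr : 0 < / s < 1).
  { split; [apply Rinv_0_lt_compat; lra|]. rewrite <- Rinv_1. apply Rinv_lt_contravar; lra. }
  assert (A := amgm (/ s) (1 + s * z) 1 Hr ltac:(nra) ltac:(lra)).
  rewrite (rpow_pos 1) in A by lra. replace (Rpower 1 (1 - / s)) with 1 in A by (unfold Rpower; rewrite ln_1, Rmult_0_r, exp_0; reflexivity).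
  replace (/ s * (1 + s * z) + (1 - / s) * 1) with (1 + z) in A by (field; lra).
  rewrite Rmult_1_r in A.
  rewrite <- (rpow_inj_id (1 + s * z) (/ s)); [| lra | nra].
  rewrite Rinv_inv. apply rpow_le; [lra|]. split; [apply rpow_ge0 | exact A].
Qed.

Lemma pow_le_self s t : 1 <= s -> 0 <= t <= 1 -> rpow t s <= t.
Proof.
  intros Hs Ht. rewrite <- (rpow_1 t) at 2; [| lra]. apply rpow_exp_le; lra.
Qed.

Lemma superadd s x y : 1 <= s -> 0 <= x -> 0 <= y -> rpow x s + rpow y s <= rpow (x + y) s.
Proof.
  intros Hs Hx Hy. destruct (Req_dec (x + y) 0) as [E|E].
  { assert (x = 0) by lra. assert (y = 0) by lra. subst. rewrite !Rplus_0_r, rpow_0. lra. }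
  set (S := x + y). assert (HS : 0 < S) by (unfold S; lra).
  assert (HSd : S = x + y) by reflexivity.
  assert (HiS : 0 < / S) by (apply Rinv_0_lt_compat; lra).
  assert (HSi : S * / S = 1) by (field; lra).
  assert (Ex : x = S * (x / S)) by (field; lra). assert (Ey : y = S * (y / S)) by (field; lra).
  rewrite Ex at 1. rewrite Ey at 1.
  assert (Hx1 : 0 <= x / S <= 1) by (unfold Rdiv; split; nra).
  assert (Hy1 : 0 <= y / S <= 1) by (unfold Rdiv; split; nra).
  rewrite !rpow_mul; try lra.
  assert (rpow (x / S) s <= x / S) by (apply pow_le_self; auto).
  assert (rpow (y / S) s <= y / S) by (apply pow_le_self; auto).
  assert (0 < rpow S s) by (apply rpow_gt0; auto).
  assert (x / S + y / S = 1) by (unfold S; field; lra).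
  nra.
Qed.

Lemma gap_min s X Y : 1 <= s -> 0 <= X -> 0 <= Y -> Y <= X ->
  (s - 1) * rpow Y s <= rpow (X + Y) s - rpow X s - rpow Y s.
Proof.
  intros Hs HX HY HYX. destruct HX as [HX|HX].
  2:{ subst. assert (Y = 0) by lra. subst. rewrite Rplus_0_r, rpow_0. lra. }
  set (z := Y / X). assert (Hz : 0 <= z) by (unfold z, Rdiv; apply Rmult_le_pos; [lra | left; apply Rinv_0_lt_compat; lra]).
  assert (E : X + Y = X * (1 + z)) by (unfold z; field; lra).
  rewrite E, rpow_mul; try lra.
  assert (B := bernoulli s z Hs Hz).
  assert (HXs : 0 < rpow X s) by (apply rpow_gt0; auto).
  assert (K : rpow X s * z >= rpow Y s).
  { destruct HY as [HY|HY].
    2:{ subst. unfold z. rewrite Rdiv_0_l, rpow_0. lra. }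
    replace s with ((s - 1) + 1) at 1 2 by ring.
    rewrite !rpow_plus; auto. rewrite !rpow_1; try lra.
    assert (rpow Y (s - 1) <= rpow X (s - 1)) by (apply rpow_le; lra).
    assert (rpow X (s - 1) * X * z = rpow X (s - 1) * Y) by (unfold z; field; lra).
    nra. }
  nra.
Qed.

Lemma sum_pow_le2 s a b : 0 <= s -> 0 <= a -> 0 <= b ->
  rpow (a + b) s <= rpow 2 s * (rpow a s + rpow b s).
Proof.
  intros Hs Ha Hb.
  assert (rpow (a + b) s <= rpow (2 * Rmax a b) s).
  { apply rpow_le; auto. split; [lra|]. unfold Rmax; destruct (Rle_dec a b); lra. }
  rewrite rpow_mul in H; [| lra | unfold Rmax; destruct (Rle_dec a b); lra].
  assert (rpow (Rmax a b) s <= rpow a s + rpow b s).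
  { unfold Rmax; destruct (Rle_dec a b); assert (0 <= rpow a s) by apply rpow_ge0;
    assert (0 <= rpow b s) by apply rpow_ge0; lra. }
  assert (0 <= rpow 2 s) by apply rpow_ge0. nra.
Qed.

Lemma cont_eps f x0 : (forall eps, 0 < eps -> exists d, 0 < d /\ forall x, Rabs (x - x0) < d -> Rabs (f x - f x0) < eps) -> continuity_pt f x0.
Proof.
  intros H. unfold continuity_pt, continue_in, limit1_in, limit_in. simpl. unfold R_dist.
  intros eps Heps. destruct (H eps Heps) as [d [Hd Hd']]. exists d; split; [lra|].
  intros x [_ Hx]; apply Hd'; auto.
Qed.
Lemma eps_cont f x0 : continuity_pt f x0 -> forall eps, 0 < eps -> exists d, 0 < d /\ forall x, Rabs (x - x0) < d -> Rabs (f x - f x0) < eps.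
Proof.
  intros H eps Heps. unfold continuity_pt, continue_in, limit1_in, limit_in in H. simpl in H. unfold R_dist in H.
  destruct (H eps (Rlt_gt _ _ Heps)) as [d [Hd Hd']]. exists d; split; [lra|].
  intros x Hx. destruct (Req_dec x0 x).
  - subst; rewrite Rminus_diag, Rabs_R0; lra.
  - apply Hd'; split; [split; [exact I | auto] | auto].
Qed.
Arguments eps_cont {f x0}.

Lemma rpow_cont a x0 : 0 < a -> continuity_pt (fun x => rpow x a) x0.
Proof.
  intros Ha. apply cont_eps. intros eps Heps.
  destruct (Rtotal_order x0 0) as [Hn|[Hz|Hp]].
  - exists (- x0); split; [lra|]. intros x Hx.
    rewrite !rpow_le0; [rewrite Rminus_diag, Rabs_R0; auto | lra | ].
    apply Rabs_def2 in Hx; lra.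
  - subst. exists (Rpower eps (/ a)); split; [apply Rpower_gt0|].
    intros x Hx. rewrite rpow_0, Rminus_0_r. rewrite Rminus_0_r in Hx.
    destruct (Rle_dec x 0).
    + rewrite rpow_le0; auto. rewrite Rabs_R0; auto.
    + rewrite Rabs_right; [| apply Rle_ge, rpow_ge0].
      rewrite rpow_pos; [|lra]. rewrite Rabs_right in Hx; [|lra].
      apply Rlt_le_trans with (Rpower (Rpower eps (/ a)) a).
      * apply Rlt_Rpower_l; auto; lra.
      * rewrite Rpower_mult, Rinv_l, Rpower_1; lra.
  - assert (Hc : continuity_pt (fun x => Rpower x a) x0).
    { apply derivable_continuous_pt. exists (a * Rpower x0 (a - 1)). apply derivable_pt_lim_power; auto. }
    destruct (eps_cont Hc eps Heps) as [d [Hd Hd']].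
    exists (Rmin d x0); split; [apply Rmin_pos; auto|].
    intros x Hx. assert (Rabs (x - x0) < d) by (apply Rlt_le_trans with (Rmin d x0); [auto | apply Rmin_l]).
    assert (Rabs (x - x0) < x0) by (apply Rlt_le_trans with (Rmin d x0); [auto | apply Rmin_r]).
    apply Rabs_def2 in H0. rewrite !rpow_pos; try lra. apply Hd'; auto.
Qed.

Lemma c2_comp2 g1 g2 (phi : R -> R -> R) : continuous2 g1 -> continuous2 g2 ->
  (forall a b eps, 0 < eps -> exists d, 0 < d /\ forall a' b', Rabs (a' - a) < d -> Rabs (b' - b) < d -> Rabs (phi a' b' - phi a b) < eps) ->
  continuous2 (fun x y => phi (g1 x y) (g2 x y)).
Proof.
  intros H1 H2 Hp x y eps Heps.
  destruct (Hp (g1 x y) (g2 x y) eps Heps) as [d [Hd Hd']].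
  destruct (H1 x y d Hd) as [d1 [Hd1 Hd1']].
  destruct (H2 x y d Hd) as [d2 [Hd2 Hd2']].
  exists (Rmin d1 d2); split; [apply Rmin_pos; auto|].
  intros x' y' Hx Hy. apply Hd'.
  - apply Hd1'; (apply Rlt_le_trans with (Rmin d1 d2); [auto | apply Rmin_l]).
  - apply Hd2'; (apply Rlt_le_trans with (Rmin d1 d2); [auto | apply Rmin_r]).
Qed.

Lemma sq_bound a a' d : d <= 1 -> Rabs (a' - a) < d -> Rabs (a' ^ 2 - a ^ 2) <= d * (2 * Rabs a + 1).
Proof.
  intros Hd H. replace (a' ^ 2 - a ^ 2) with ((a' - a) * (a' + a)) by ring.
  rewrite Rabs_mult. apply Rmult_le_compat; try apply Rabs_pos; [lra|].
  replace (a' + a) with ((a' - a) + 2 * a) by ring.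
  apply Rle_trans with (Rabs (a' - a) + Rabs (2 * a)); [apply Rabs_triang|].
  rewrite Rabs_mult, (Rabs_right 2); lra.
Qed.

Lemma sumsq_cont a b eps : 0 < eps -> exists d, 0 < d /\ forall a' b', Rabs (a' - a) < d -> Rabs (b' - b) < d ->
  Rabs ((a' ^ 2 + b' ^ 2) - (a ^ 2 + b ^ 2)) < eps.
Proof.
  intros He. set (C := 2 * Rabs a + 1 + (2 * Rabs b + 1)).
  assert (HC : 0 < C) by (unfold C; assert (0 <= Rabs a) by apply Rabs_pos; assert (0 <= Rabs b) by apply Rabs_pos; lra).
  exists (Rmin 1 (eps / (2 * C))). split.
  { apply Rmin_pos; [lra|]. apply Rdiv_lt_0_compat; lra. }
  intros a' b' Ha Hb. set (d := Rmin 1 (eps / (2 * C))) in *.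
  assert (d1 : d <= 1) by apply Rmin_l. assert (d2 : d <= eps / (2 * C)) by apply Rmin_r.
  assert (A := sq_bound a a' d d1 Ha). assert (B := sq_bound b b' d d1 Hb).
  replace ((a' ^ 2 + b' ^ 2) - (a ^ 2 + b ^ 2)) with ((a' ^ 2 - a ^ 2) + (b' ^ 2 - b ^ 2)) by ring.
  apply Rle_lt_trans with (Rabs (a' ^ 2 - a ^ 2) + Rabs (b' ^ 2 - b ^ 2)); [apply Rabs_triang|].
  apply Rle_lt_trans with (d * C); [unfold C; lra|].
  apply Rle_lt_trans with (eps / (2 * C) * C); [apply Rmult_le_compat_r; lra|].
  replace (eps / (2 * C) * C) with (eps / 2) by (field; lra). lra.
Qed.

Lemma c2_comp1 g (psi : R -> R) : continuous2 g -> (forall x y, 0 <= g x y) ->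
  (forall z, 0 <= z -> continuity_pt psi z) -> continuous2 (fun x y => psi (g x y)).
Proof.
  intros Hg Hpos Hpsi x y eps Heps.
  destruct (eps_cont (Hpsi (g x y) (Hpos x y)) eps Heps) as [d [Hd Hd']].
  destruct (Hg x y d Hd) as [d1 [Hd1 Hd1']].
  exists d1; split; [auto|]. intros x' y' Hx Hy. apply Hd'. apply Hd1'; auto.
Qed.

Lemma c2_sec g x y0 : continuous2 g -> continuity_pt (fun y => g x y) y0.
Proof.
  intros Hg. apply cont_eps. intros eps Heps. destruct (Hg x y0 eps Heps) as [d [Hd Hd']].
  exists d; split; auto. intros y Hy. apply Hd'; auto. rewrite Rminus_diag, Rabs_R0; auto.
Qed.

Lemma tube g x0 al be eps : continuous2 g -> al <= be -> 0 < eps ->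
  exists d, 0 < d /\ forall x y, Rabs (x - x0) < d -> al <= y <= be -> Rabs (g x y - g x0 y) < eps.
Proof.
  intros Hg Hab Heps.
  set (S := fun t => al <= t <= be /\ exists d, 0 < d /\ forall x y, Rabs (x - x0) < d -> al <= y <= t -> Rabs (g x y - g x0 y) < eps).
  assert (Sal : S al).
  { split; [lra|]. destruct (Hg x0 al eps Heps) as [d [Hd Hd']]. exists d; split; auto.
    intros x y Hx Hy. assert (y = al) by lra. subst. apply Hd'; auto. rewrite Rminus_diag, Rabs_R0; auto. }
  assert (bS : bound S) by (exists be; intros t [Ht _]; lra).
  destruct (completeness S bS (ex_intro _ al Sal)) as [ts [Hts1 Hts2]].
  assert (Hts : al <= ts <= be).
  { split; [apply Hts1; auto | apply Hts2; intros t [Ht _]; lra]. }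
  destruct (Hg x0 ts (eps / 2) ltac:(lra)) as [d1 [Hd1 Hd1']].
  assert (Hnear : forall x y, Rabs (x - x0) < d1 -> Rabs (y - ts) < d1 -> Rabs (g x y - g x0 y) < eps).
  { intros x y Hx Hy. assert (A := Hd1' x y Hx Hy).
    assert (B := Hd1' x0 y ltac:(rewrite Rminus_diag, Rabs_R0; auto) Hy).
    replace (g x y - g x0 y) with ((g x y - g x0 ts) - (g x0 y - g x0 ts)) by ring.
    apply Rle_lt_trans with (Rabs (g x y - g x0 ts) + Rabs (g x0 y - g x0 ts)).
    - eapply Rle_trans; [apply Rabs_triang|]. rewrite Rabs_Ropp; lra.
    - lra. }
  destruct (not_ub_ex S (ts - d1)) as [t1 [[Ht1 [d [Hd Hd']]] Ht1']].
  { intro Hub. specialize (Hts2 _ Hub). lra. }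
  set (t2 := Rmin be (ts + d1 / 2)).
  assert (St2 : S t2).
  { split. { unfold t2; split; [apply Rle_trans with ts; [lra|] | apply Rmin_l];
      unfold Rmin; destruct (Rle_dec be (ts + d1 / 2)); lra. }
    exists (Rmin d d1); split; [apply Rmin_pos; auto|].
    intros x y Hx Hy.
    assert (Hx1 : Rabs (x - x0) < d) by (apply Rlt_le_trans with (Rmin d d1); [auto | apply Rmin_l]).
    assert (Hx2 : Rabs (x - x0) < d1) by (apply Rlt_le_trans with (Rmin d d1); [auto | apply Rmin_r]).
    destruct (Rle_dec y t1).
    - apply Hd'; auto; lra.
    - apply Hnear; auto. assert (t1 <= ts) by (apply Hts1; split; [auto | exists d; split; auto]).
      assert (t2 <= ts + d1 / 2) by apply Rmin_r.
      apply Rabs_def1; lra. }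
  assert (t2 <= ts) by (apply Hts1; auto).
  assert (Et2 : t2 = be).
  { unfold t2 in *. unfold Rmin in *. destruct (Rle_dec be (ts + d1 / 2)); lra. }
  rewrite Et2 in St2. destruct St2 as [_ [d' [Hd'0 Hd'1]]].
  exists d'; split; auto.
Qed.

Lemma RInt_cont g al be x0 : continuous2 g -> al <= be ->
  continuity_pt (fun x => RInt (fun y => g x y) al be) x0.
Proof.
  intros Hg Hab. apply cont_eps. intros eps Heps.
  set (e' := eps / (be - al + 1)).
  assert (He' : 0 < e') by (unfold e'; apply Rdiv_lt_0_compat; lra).
  destruct (tube g x0 al be e' Hg Hab He') as [d [Hd Hd']].
  exists d; split; auto. intros x Hx.
  assert (ix : forall x, Riemann_integrable (fun y => g x y) al be).
  { intros; apply continuity_implies_RiemannInt; auto. intros; apply c2_sec; auto. }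
  replace (RInt (fun y => g x y) al be - RInt (fun y => g x0 y) al be)
    with (RInt (fun y => g x y + -1 * g x0 y) al be) by (rewrite (RInt_lin (-1) (ix x) (ix x0)); ring).
  eapply Rle_lt_trans; [apply RInt_abs; auto; apply RiemannInt_P10; auto|].
  eapply Rle_lt_trans.
  { apply (RInt_le (g := fun _ => e')); auto.
    - apply RiemannInt_P16. apply RiemannInt_P10; auto.
    - exact (RiemannInt_P14 al be e').
    - intros y Hy. left. replace (g x y + -1 * g x0 y) with (g x y - g x0 y) by ring. apply Hd'; auto; lra. }
  rewrite RInt_const. unfold e'.
  apply Rlt_le_trans with (eps / (be - al + 1) * (be - al + 1)).
  - apply Rmult_lt_compat_l; [auto | lra].
  - right; field; lra.
Qed.

Definition rr : R := 10 / 11.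
Lemma rr_bounds : 0 < rr < 1.
Proof. unfold rr; lra. Qed.

Definition okf (g : R -> R) := (forall x, continuity_pt g x) /\ supp g.

Definition Lam (I : R -> Prop) (g : R -> R) := IntR (fun x => ind I x * g x).

Lemma okf_ind I g : is_interval I -> okf g -> prod (supp (fun x => ind I x * g x)) (intg (fun x => ind I x * g x)).
Proof.
  intros HI [Hc Hs]. split.
  - destruct Hs as [K [HK Hs]]. exists K; split; auto; intros x Hx; rewrite Hs; auto; ring.
  - intros a b Hab; apply ind_int; auto.
Qed.
Arguments okf_ind {I g}.

Lemma okf_lin g1 g2 l : okf g1 -> okf g2 -> okf (fun x => g1 x + l * g2 x).
Proof.
  intros [H1 s1] [H2 s2]. split.
  - intros x. apply continuity_pt_plus; auto. apply continuity_pt_mult; auto. apply continuity_pt_const; intros ? ?; auto.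
  - apply supp_lin; auto.
Qed.

Lemma okf_scal g l : okf g -> okf (fun x => l * g x).
Proof.
  intros [H1 s1]. split.
  - intros x. apply continuity_pt_mult; auto. apply continuity_pt_const; intros ? ?; auto.
  - apply supp_scal; auto.
Qed.

Lemma Lam_lin I g1 g2 l : is_interval I -> okf g1 -> okf g2 ->
  Lam I (fun x => g1 x + l * g2 x) = Lam I g1 + l * Lam I g2.
Proof.
  intros HI o1 o2. unfold Lam.
  destruct (okf_ind HI o1) as [s1 i1]. destruct (okf_ind HI o2) as [s2 i2].
  rewrite <- (IntR_lin l s1 s2 i1 i2). f_equal. apply functional_extensionality; intros; ring.
Qed.

Lemma Lam_scal I g l : is_interval I -> okf g -> Lam I (fun x => l * g x) = l * Lam I g.
Proof.
  intros HI o. unfold Lam. destruct (okf_ind HI o) as [s i].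
  rewrite <- (IntR_scal l s i). f_equal. apply functional_extensionality; intros; ring.
Qed.

Lemma Lam_le I g1 g2 : is_interval I -> okf g1 -> okf g2 -> (forall x, g1 x <= g2 x) -> Lam I g1 <= Lam I g2.
Proof.
  intros HI o1 o2 H. unfold Lam.
  destruct (okf_ind HI o1) as [s1 i1]. destruct (okf_ind HI o2) as [s2 i2].
  apply IntR_le; auto. intros x. unfold ind. destruct (excluded_middle_informative (I x)); [rewrite !Rmult_1_l; auto | lra].
Qed.

Lemma Lam_ge0 I g : is_interval I -> okf g -> (forall x, 0 <= g x) -> 0 <= Lam I g.
Proof.
  intros HI o H. unfold Lam. destruct (okf_ind HI o) as [s i]. apply IntR_nonneg; auto.
  intros x; unfold ind; destruct (excluded_middle_informative (I x)); [rewrite Rmult_1_l; auto | lra].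
Qed.

Definition hyp (h : R -> R -> R) (K : R) := continuous2 h /\ (forall x y, 0 <= h x y) /\ 0 <= K /\
  (forall x y, K < Rabs x \/ K < Rabs y -> h x y = 0).

Definition Eq (h : R -> R -> R) (x al be : R) : R := RInt (fun y => rpow (h x y) rr) al be.
Definition Hq (h : R -> R -> R) (x al be : R) : R := RInt (fun y => h x y) al be.

Lemma hyp_c2r h K : hyp h K -> continuous2 (fun x y => rpow (h x y) rr).
Proof.
  intros [Hc [Hp _]]. apply (c2_comp1 h (fun z => rpow z rr)); auto.
  intros; apply rpow_cont; apply rr_bounds.
Qed.

Lemma int_y g x a b : continuous2 g -> Riemann_integrable (fun y => g x y) a b.
Proof.
  intros Hg. destruct (Rle_dec a b).
  - apply continuity_implies_RiemannInt; auto; intros; apply c2_sec; auto.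
  - apply RiemannInt_P1. apply continuity_implies_RiemannInt; [lra|]; intros; apply c2_sec; auto.
Qed.

Lemma iE_lem h K x a b : hyp h K -> Riemann_integrable (fun y => rpow (h x y) rr) a b.
Proof. intros Hh. exact (int_y (fun x y => rpow (h x y) rr) x a b (hyp_c2r h K Hh)). Qed.
Lemma iH_lem h K x a b : hyp h K -> Riemann_integrable (fun y => h x y) a b.
Proof. intros Hh. exact (int_y h x a b (proj1 Hh)). Qed.

Lemma RInt_fun0 a b : RInt (fun _ => 0) a b = 0.
Proof. rewrite RInt_const; ring. Qed.

Lemma okf_Eq h K al be : hyp h K -> al <= be -> okf (fun x => Eq h x al be).
Proof.
  intros Hh Hab. split.
  - intros x. unfold Eq. apply RInt_cont; auto. eapply hyp_c2r; eauto.
  - destruct Hh as [_ [_ [HK Hs]]]. exists (K + 1); split; [lra|]. intros x Hx. unfold Eq.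
    replace (fun y => rpow (h x y) rr) with (fun _ : R => 0). { apply RInt_fun0. }
    apply functional_extensionality; intros y. rewrite Hs; [rewrite rpow_0; auto | left; lra].
Qed.

Lemma okf_Hq h K al be : hyp h K -> al <= be -> okf (fun x => rpow (Hq h x al be) rr).
Proof.
  intros Hh Hab. split.
  - intros x. unfold Hq. apply (continuity_pt_comp (fun x => RInt (fun y => h x y) al be) (fun z => rpow z rr)).
    + apply RInt_cont; auto. apply Hh.
    + apply rpow_cont; apply rr_bounds.
  - destruct Hh as [_ [_ [HK Hs]]]. exists (K + 1); split; [lra|]. intros x Hx. unfold Hq.
    replace (fun y => h x y) with (fun _ : R => 0). { rewrite RInt_fun0, rpow_0; auto. }
    apply functional_extensionality; intros y. rewrite Hs; [auto | left; lra].
Qed.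

Lemma Eq_ge0 h K x al be : hyp h K -> al <= be -> 0 <= Eq h x al be.
Proof.
  intros Hh Hab. unfold Eq. rewrite <- (RInt_fun0 al be).
  apply RInt_le; auto. { exact (RiemannInt_P14 al be 0). } { eapply iE_lem; eauto. }
  intros; apply rpow_ge0.
Qed.

Lemma Hq_ge0 h K x al be : hyp h K -> al <= be -> 0 <= Hq h x al be.
Proof.
  intros Hh Hab. unfold Hq. rewrite <- (RInt_fun0 al be).
  apply RInt_le; auto. { exact (RiemannInt_P14 al be 0). } { eapply iH_lem; eauto. }
  intros; apply Hh.
Qed.

Lemma Eq_add h K x a b c : hyp h K -> Eq h x a b + Eq h x b c = Eq h x a c.
Proof. intros Hh. unfold Eq. apply RInt_chasles; eapply iE_lem; eauto. Qed.
Lemma Hq_add h K x a b c : hyp h K -> Hq h x a b + Hq h x b c = Hq h x a c.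
Proof. intros Hh. unfold Hq. apply RInt_chasles; eapply iH_lem; eauto. Qed.

Lemma RInt_scal_r f c a b : Riemann_integrable f a b -> RInt (fun y => f y * c) a b = c * RInt f a b.
Proof.
  intros p. pose proof (RInt_lin c (RiemannInt_P14 a b 0) p) as E. unfold fct_cte in E.
  rewrite RInt_fun0, Rplus_0_l in E. rewrite <- E. f_equal. apply functional_extensionality; intros; ring.
Qed.

Lemma jensen_pt h K x al be : hyp h K -> al < be ->
  Eq h x al be <= rpow (be - al) (1 - rr) * rpow (Hq h x al be) rr.
Proof.
  intros Hh Hab. set (L := be - al). assert (HL : 0 < L) by (unfold L; lra).
  assert (Hr := rr_bounds).
  assert (iE : Riemann_integrable (fun y => rpow (h x y) rr) al be) by (eapply iE_lem; eauto).
  assert (iH : Riemann_integrable (fun y => h x y) al be) by (eapply iH_lem; eauto).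
  assert (key : forall lam, 0 < lam -> Eq h x al be * rpow lam (1 - rr) <= rr * Hq h x al be + (1 - rr) * lam * L).
  { intros lam Hlam.
    assert (i1 : Riemann_integrable (fun y => rpow (h x y) rr * rpow lam (1 - rr)) al be).
    { apply Riemann_integrable_ext with (fun y => rpow lam (1 - rr) * rpow (h x y) rr); [intros; ring | apply Riemann_integrable_scal; auto]. }
    assert (i2 := RiemannInt_P10 rr (RiemannInt_P14 al be ((1 - rr) * lam)) iH).
    assert (Hle : RInt (fun y => rpow (h x y) rr * rpow lam (1 - rr)) al be <=
                  RInt (fun y => fct_cte ((1 - rr) * lam) y + rr * h x y) al be).
    { apply (RInt_le (Rlt_le _ _ Hab) i1 i2). intros y _. unfold fct_cte.
      assert (A := amgm rr (h x y) lam Hr (proj1 (proj2 Hh) x y) (Rlt_le _ _ Hlam)). lra. }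
    rewrite (RInt_scal_r _ _ _ _ iE) in Hle. rewrite (RInt_lin rr (RiemannInt_P14 _ _ _) iH) in Hle.
    change (RInt (fct_cte ((1 - rr) * lam)) al be) with (RInt (fun _ => (1 - rr) * lam) al be) in Hle.
    rewrite RInt_const in Hle. unfold Eq, Hq. fold L in Hle. lra. }
  assert (HE0 : 0 <= Eq h x al be) by (eapply Eq_ge0; eauto; lra).
  assert (HH0 : 0 <= Hq h x al be) by (eapply Hq_ge0; eauto; lra).
  destruct HH0 as [HH|HH].
  - set (Hx := Hq h x al be) in *. set (lam := Hx / L).
    assert (Hlam : 0 < lam) by (unfold lam; apply Rdiv_lt_0_compat; auto).
    specialize (key lam Hlam). replace (rr * Hx + (1 - rr) * lam * L) with Hx in key by (unfold lam; field; lra).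
    assert (Hp : 0 < rpow lam (1 - rr)) by (apply rpow_gt0; auto).
    assert (E1 : rpow lam (1 - rr) = rpow Hx (1 - rr) * / rpow L (1 - rr)).
    { unfold lam, Rdiv. rewrite rpow_mul, rpow_inv; auto; [lra | left; apply Rinv_0_lt_compat; auto]. }
    assert (E2 : Hx = rpow Hx rr * rpow Hx (1 - rr)).
    { rewrite <- rpow_plus; auto. replace (rr + (1 - rr)) with 1 by ring. rewrite rpow_1; lra. }
    assert (P1 : 0 < rpow Hx (1 - rr)) by (apply rpow_gt0; auto).
    assert (P2 : 0 < rpow L (1 - rr)) by (apply rpow_gt0; auto).
    apply Rmult_le_reg_r with (rpow lam (1 - rr)); auto.
    rewrite E1. rewrite E1 in key.
    replace (rpow L (1 - rr) * rpow Hx rr * (rpow Hx (1 - rr) * / rpow L (1 - rr)))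
      with (rpow Hx rr * rpow Hx (1 - rr)) by (field; lra).
    rewrite <- E2. lra.
  - rewrite <- HH, rpow_0, Rmult_0_r. rewrite <- HH in key.
    destruct HE0 as [HE|HE]; [|lra]. exfalso.
    set (E := Eq h x al be) in *.
    set (lam := rpow (E / (2 * L)) (/ rr)).
    assert (Hq0 : 0 < E / (2 * L)) by (apply Rdiv_lt_0_compat; lra).
    assert (Hlam : 0 < lam) by (apply rpow_gt0; auto).
    specialize (key lam Hlam). rewrite Rmult_0_r, Rplus_0_l in key.
    assert (Er : rpow lam rr = E / (2 * L)).
    { unfold lam. rewrite rpow_mult; [| lra]. rewrite Rinv_l; [apply rpow_1; lra | lra]. }
    assert (Elam : lam = rpow lam rr * rpow lam (1 - rr)).
    { rewrite <- rpow_plus; auto. replace (rr + (1 - rr)) with 1 by ring. rewrite rpow_1; lra. }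
    assert (Hp : 0 < rpow lam (1 - rr)) by (apply rpow_gt0; auto).
    set (P := rpow lam (1 - rr)) in *. rewrite Er in Elam.
    assert (E * P <= (1 - rr) * (E / (2 * L)) * L * P).
    { replace ((1 - rr) * (E / (2 * L)) * L * P) with ((1 - rr) * (E / (2 * L) * P) * L) by ring.
      rewrite <- Elam. exact key. }
    assert (E <= (1 - rr) * (E / (2 * L)) * L) by (apply Rmult_le_reg_r with P; auto).
    replace ((1 - rr) * (E / (2 * L)) * L) with ((1 - rr) * E / 2) in H0 by (field; lra).
    assert (Hr' := rr_bounds). nra.
Qed.
Arguments Eq_add {h K}.
Arguments Hq_add {h K}.

Definition ee h I al be := Lam I (fun x => Eq h x al be).
Definition mu h I al be := Lam I (fun x => rpow (Hq h x al be) rr).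
Definition aY h I al be := rpow (be - al) (rr - 1) * ee h I al be.

Lemma ee_add h K I a b c : hyp h K -> is_interval I -> a <= b -> b <= c ->
  ee h I a c = ee h I a b + ee h I b c.
Proof.
  intros Hh HI Hab Hbc. unfold ee.
  replace (fun x => Eq h x a c) with (fun x => Eq h x a b + 1 * Eq h x b c).
  - rewrite Lam_lin; auto; [ring | eapply okf_Eq; eauto | eapply okf_Eq; eauto].
  - apply functional_extensionality; intros x. rewrite <- (Eq_add x a b c Hh). ring.
Qed.
Arguments ee_add {h K I a b c}.

Lemma ee_ge0 h K I a b : hyp h K -> is_interval I -> a <= b -> 0 <= ee h I a b.
Proof.
  intros Hh HI Hab. unfold ee. apply Lam_ge0; auto. eapply okf_Eq; eauto.
  intros; eapply Eq_ge0; eauto.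
Qed.
Arguments ee_ge0 {h K I a b}.

Lemma mu_ge0 h K I a b : hyp h K -> is_interval I -> a <= b -> 0 <= mu h I a b.
Proof.
  intros Hh HI Hab. unfold mu. apply Lam_ge0; auto. eapply okf_Hq; eauto.
  intros; apply rpow_ge0.
Qed.
Arguments mu_ge0 {h K I a b}.

Lemma ee_le_mu h K I a b : hyp h K -> is_interval I -> a < b ->
  ee h I a b <= rpow (b - a) (1 - rr) * mu h I a b.
Proof.
  intros Hh HI Hab. unfold ee, mu. rewrite <- Lam_scal; auto; [| eapply okf_Hq; eauto; lra].
  apply Lam_le; auto.
  - eapply okf_Eq; eauto; lra.
  - apply okf_scal. eapply okf_Hq; eauto; lra.
  - intros x. eapply jensen_pt; eauto.
Qed.
Arguments ee_le_mu {h K I a b}.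

Lemma aY_le_mu h K I a b : hyp h K -> is_interval I -> a < b -> aY h I a b <= mu h I a b.
Proof.
  intros Hh HI Hab. unfold aY.
  assert (Hp : 0 < rpow (b - a) (rr - 1)) by (apply rpow_gt0; lra).
  assert (E : rpow (b - a) (rr - 1) * rpow (b - a) (1 - rr) = 1).
  { rewrite <- rpow_plus; [| lra]. replace (rr - 1 + (1 - rr)) with 0 by ring.
    rewrite rpow_pos; [apply Rpower_O|]; lra. }
  assert (H := ee_le_mu Hh HI Hab).
  apply Rmult_le_compat_l with (r := rpow (b - a) (rr - 1)) in H; [| lra].
  rewrite <- Rmult_assoc, E, Rmult_1_l in H. exact H.
Qed.

Lemma Hq_mono h K x a' a b b' : hyp h K -> a' <= a -> a <= b -> b <= b' -> Hq h x a b <= Hq h x a' b'.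
Proof.
  intros Hh H1 H2 H3.
  rewrite <- (Hq_add x a' a b' Hh), <- (Hq_add x a b b' Hh).
  assert (0 <= Hq h x a' a) by (eapply Hq_ge0; eauto).
  assert (0 <= Hq h x b b') by (eapply Hq_ge0; eauto). lra.
Qed.

Lemma mu_mono h K I a' a b b' : hyp h K -> is_interval I -> a' <= a -> a <= b -> b <= b' ->
  mu h I a b <= mu h I a' b'.
Proof.
  intros Hh HI H1 H2 H3. unfold mu. apply Lam_le; auto.
  - eapply okf_Hq; eauto.
  - eapply okf_Hq; eauto; lra.
  - intros x. apply rpow_le; [left; apply rr_bounds|]. split; [eapply Hq_ge0; eauto|].
    eapply Hq_mono; eauto.
Qed.

Lemma mu_super h K I a b c : hyp h K -> is_interval I -> a <= b -> b <= c ->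
  rpow (mu h I a b) (/ rr) + rpow (mu h I b c) (/ rr) <= rpow (mu h I a c) (/ rr).
Proof.
  intros Hh HI Hab Hbc. assert (Hr := rr_bounds).
  assert (Hir : 0 < / rr) by (apply Rinv_0_lt_compat; lra).
  assert (m1p := mu_ge0 Hh HI Hab). assert (m2p := mu_ge0 Hh HI Hbc).
  assert (M1 : mu h I a b <= mu h I a c) by (eapply mu_mono; eauto; lra).
  assert (M2 : mu h I b c <= mu h I a c) by (eapply mu_mono; eauto; lra).
  destruct m1p as [m1p|m1z].
  2:{ rewrite <- m1z, rpow_0, Rplus_0_l. apply rpow_le; [lra|]. split; auto. }
  destruct m2p as [m2p|m2z].
  2:{ rewrite <- m2z, rpow_0, Rplus_0_r. apply rpow_le; [lra|]. split; lra. }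
  set (mu1 := mu h I a b) in *. set (mu2 := mu h I b c) in *. set (mu3 := mu h I a c) in *.
  set (m1 := rpow mu1 (/ rr)). set (m2 := rpow mu2 (/ rr)).
  assert (Hm1 : 0 < m1) by (apply rpow_gt0; auto). assert (Hm2 : 0 < m2) by (apply rpow_gt0; auto).
  assert (Em1 : rpow m1 rr = mu1) by (unfold m1; rewrite rpow_mult, Rinv_l; [apply rpow_1|..]; lra).
  assert (Em2 : rpow m2 rr = mu2) by (unfold m2; rewrite rpow_mult, Rinv_l; [apply rpow_1|..]; lra).
  set (l := m1 / (m1 + m2)).
  assert (Hl : 0 <= l <= 1) by (unfold l; split; [apply Rmult_le_pos; [lra | left; apply Rinv_0_lt_compat; lra] | apply Rmult_le_reg_r with (m1 + m2); [lra|]; unfold Rdiv; rewrite Rmult_assoc, Rinv_l; lra]).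
  set (S := m1 + m2). assert (HS : 0 < S) by (unfold S; lra).
  assert (PW : forall x, l / mu1 * rpow (Hq h x a b) rr + (1 - l) / mu2 * rpow (Hq h x b c) rr
                 <= / rpow S rr * rpow (Hq h x a c) rr).
  { intros x. assert (H1 : 0 <= Hq h x a b) by (eapply Hq_ge0; eauto).
    assert (H2 : 0 <= Hq h x b c) by (eapply Hq_ge0; eauto).
    assert (C := concave_comb rr l (Hq h x a b / m1) (Hq h x b c / m2) Hr Hl
                  ltac:(unfold Rdiv; apply Rmult_le_pos; [lra | left; apply Rinv_0_lt_compat; lra]) ltac:(unfold Rdiv; apply Rmult_le_pos; [lra | left; apply Rinv_0_lt_compat; lra])).
    replace (l * (Hq h x a b / m1) + (1 - l) * (Hq h x b c / m2)) with (Hq h x a c * / S) in C.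
    2:{ rewrite <- (Hq_add x a b c Hh). unfold l, S. field. lra. }
    unfold Rdiv in C. rewrite !rpow_mul, !rpow_inv in C; try lra;
      try (left; apply Rinv_0_lt_compat; lra); try (eapply Hq_ge0; eauto; lra).
    rewrite Em1, Em2 in C. unfold Rdiv. lra. }
  assert (o1 : okf (fun x => rpow (Hq h x a b) rr)) by (eapply okf_Hq; eauto).
  assert (o2 : okf (fun x => rpow (Hq h x b c) rr)) by (eapply okf_Hq; eauto).
  assert (o3 : okf (fun x => rpow (Hq h x a c) rr)) by (eapply okf_Hq; eauto; lra).
  assert (EL : Lam I (fun x => l / mu1 * rpow (Hq h x a b) rr + (1 - l) / mu2 * rpow (Hq h x b c) rr)
               = l / mu1 * mu1 + (1 - l) / mu2 * mu2).
  { rewrite (Lam_lin I (fun x => l / mu1 * rpow (Hq h x a b) rr) (fun x => rpow (Hq h x b c) rr) ((1 - l) / mu2));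
      auto; [| apply okf_scal; auto].
    rewrite (Lam_scal I (fun x => rpow (Hq h x a b) rr) (l / mu1)); auto. }
  assert (LL : 1 <= / rpow S rr * mu3).
  { replace 1 with (l / mu1 * mu1 + (1 - l) / mu2 * mu2) by (field; lra).
    rewrite <- EL. unfold mu3, mu.
    rewrite <- (Lam_scal I (fun x => rpow (Hq h x a c) rr) (/ rpow S rr)); auto.
    apply Lam_le; auto.
    all: try (intros x; apply PW).
    all: try (apply okf_lin; [apply okf_scal|]; auto).
    all: try (apply okf_scal; auto). }
  assert (HSr : 0 < rpow S rr) by (apply rpow_gt0; auto).
  assert (rpow S rr <= mu3).
  { apply Rmult_le_reg_l with (/ rpow S rr); [apply Rinv_0_lt_compat; auto|]. rewrite Rinv_l; lra. }
  replace S with (rpow (rpow S rr) (/ rr)) by (rewrite rpow_mult, Rinv_r; [apply rpow_1|..]; lra).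
  apply rpow_le; [lra|]. split; [apply rpow_ge0 | auto].
Qed.

Definition hh (u v : R -> R -> R) x y := u x y ^ 2 + v x y ^ 2.

Lemma setup u v : smooth2 u -> smooth2 v -> compact_support2 u -> compact_support2 v ->
  exists K, hyp (hh u v) K.
Proof.
  intros [Du [Du0 Du1]] [Dv [Dv0 Dv1]] [Mu HMu] [Mv HMv].
  assert (cu : continuous2 u) by (rewrite <- Du0; apply Du1).
  assert (cv : continuous2 v) by (rewrite <- Dv0; apply Dv1).
  exists (Rmax (Rmax Mu Mv) 0). split; [|split; [|split]].
  - unfold hh. apply (c2_comp2 u v (fun a b => a ^ 2 + b ^ 2)); auto.
    intros a b eps He. apply sumsq_cont; auto.
  - intros x y; unfold hh; nra.
  - apply Rmax_r.
  - intros x y Hxy. unfold hh.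
    assert (Rmax Mu Mv <= Rmax (Rmax Mu Mv) 0) by apply Rmax_l.
    assert (Mu <= Rmax Mu Mv) by apply Rmax_l. assert (Mv <= Rmax Mu Mv) by apply Rmax_r.
    rewrite HMu, HMv; [ring | lra | lra].
Qed.

Definition q0v : q0 = 20 / 11 := eq_refl.

Lemma cabs_q0 u v x y : rpow (cabs2 u v x y) q0 = rpow (hh u v x y) rr.
Proof.
  unfold cabs2. fold (hh u v x y). assert (H0 : 0 <= hh u v x y) by (unfold hh; nra).
  destruct H0 as [H0|H0].
  - rewrite <- Rpower_sqrt; auto. rewrite rpow_pos; [| apply Rpower_gt0]. rewrite rpow_pos; auto.
    rewrite Rpower_mult. f_equal. unfold q0, rr; field.
  - rewrite <- H0, sqrt_0, !rpow_0. auto.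
Qed.

Lemma cabs_2 u v x y : rpow (cabs2 u v x y) 2 = hh u v x y.
Proof.
  unfold cabs2. fold (hh u v x y). assert (H0 : 0 <= hh u v x y) by (unfold hh; nra).
  destruct H0 as [H0|H0].
  - rewrite <- Rpower_sqrt; auto. rewrite rpow_pos; [| apply Rpower_gt0].
    rewrite Rpower_mult. replace (/ 2 * 2) with 1 by field. apply Rpower_1; auto.
  - rewrite <- H0, sqrt_0, !rpow_0. auto.
Qed.

Lemma RInt_scal_l f c a b : Riemann_integrable f a b -> RInt (fun y => c * f y) a b = c * RInt f a b.
Proof.
  intros p. rewrite <- (RInt_scal_r _ _ _ _ p). f_equal. apply functional_extensionality; intros; ring.
Qed.

Lemma Y_int c G al be : (forall y, continuity_pt G y) -> al <= be ->
  IntR (fun y => c * ind (fun y => al <= y <= be) y * G y) = c * RInt G al be.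
Proof.
  intros HG Hab. set (K0 := Rabs al + Rabs be + 1).
  assert (HK0 : 0 <= K0) by (unfold K0; assert (0 <= Rabs al) by apply Rabs_pos; assert (0 <= Rabs be) by apply Rabs_pos; lra).
  assert (Hal : - K0 < al) by (unfold K0; assert (- al <= Rabs al) by (rewrite <- Rabs_Ropp; apply RRle_abs); assert (0 <= Rabs be) by apply Rabs_pos; lra).
  assert (Hbe : be < K0) by (unfold K0; assert (be <= Rabs be) by apply RRle_abs; assert (0 <= Rabs al) by apply Rabs_pos; lra).
  assert (ig : forall a b, a <= b -> Riemann_integrable (fun y => c * ind (fun y => al <= y <= be) y * G y) a b).
  { intros a b Hab'. apply Riemann_integrable_ext with (fun y => c * (ind (fun y => al <= y <= be) y * G y)).
    { intros; ring. } apply Riemann_integrable_scal. apply ind_int; auto.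
    intros x y z Hx Hz Hxy Hyz; lra. }
  rewrite (IntR_supp K0); auto.
  - assert (p1 := ig (- K0) al ltac:(lra)). assert (p2 := ig al be Hab). assert (p3 := ig be K0 ltac:(lra)).
    rewrite <- (RInt_chasles (RiemannInt_P24 p1 p2) p3), <- (RInt_chasles p1 p2).
    rewrite (RInt_zero_fun (f := fun y => c * ind (fun y => al <= y <= be) y * G y) (a := - K0) (b := al)); [| lra |].
    2:{ intros x Hx. rewrite ind_out; [ring | lra]. }
    rewrite (RInt_zero_fun (f := fun y => c * ind (fun y => al <= y <= be) y * G y) (a := be) (b := K0)); [| lra |].
    2:{ intros x Hx. rewrite ind_out; [ring | lra]. }
    assert (pG : Riemann_integrable G al be) by (apply continuity_implies_RiemannInt; auto).
    rewrite (RInt_ext_open (f := fun y => c * ind (fun y => al <= y <= be) y * G y) (g := fun y => c * G y) Hab).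
    + rewrite RInt_scal_l; auto. ring.
    + apply Riemann_integrable_scal; auto.
    + intros x Hx. rewrite ind_in; [ring | lra].
  - intros x Hx. rewrite ind_out; [ring|]. intros [H1 H2].
    unfold Rabs in Hx; destruct (Rcase_abs x); lra.
Qed.

Lemma pow2_pos k : 0 < powerRZ 2 k.
Proof. apply powerRZ_lt; lra. Qed.

Lemma norm_IJ_eq u v I K k n : hyp (hh u v) K -> is_interval I ->
  norm_IJ u v I (dyad k n) = rpow (ee (hh u v) I (powerRZ 2 k * (IZR n - 1)) (powerRZ 2 k * (IZR n + 1))) (1 / q0).
Proof.
  intros Hh HI. unfold norm_IJ. f_equal. unfold ee, Lam. f_equal. apply functional_extensionality; intros x.
  set (al := powerRZ 2 k * (IZR n - 1)). set (be := powerRZ 2 k * (IZR n + 1)).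
  assert (Hab : al <= be) by (unfold al, be; assert (H := pow2_pos k); nra).
  replace (fun y => ind I x * ind (dyad k n) y * rpow (cabs2 u v x y) q0)
    with (fun y => ind I x * ind (fun y => al <= y <= be) y * rpow (hh u v x y) rr).
  2:{ apply functional_extensionality; intros y. rewrite cabs_q0. reflexivity. }
  rewrite Y_int; auto. intros y. apply (c2_sec (fun x y => rpow (hh u v x y) rr)). eapply hyp_c2r; eauto.
Qed.

Lemma norm_mixed_eq u v I K : hyp (hh u v) K -> is_interval I ->
  norm_mixed u v I = rpow (mu (hh u v) I (- (K + 1)) (K + 1)) (1 / q0).
Proof.
  intros Hh HI. unfold norm_mixed. f_equal. unfold mu, Lam. f_equal. apply functional_extensionality; intros x.
  assert (HK : 0 <= K) by apply Hh.
  replace (fun y => ind I x * rpow (cabs2 u v x y) 2) with (fun y => ind I x * hh u v x y).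
  2:{ apply functional_extensionality; intros y. rewrite cabs_2. reflexivity. }
  rewrite (IntR_supp (K + 1)); [| lra | |].
  - rewrite RInt_scal_l; [| eapply iH_lem; eauto].
    fold (Hq (hh u v) x (- (K + 1)) (K + 1)).
    assert (H0 : 0 <= Hq (hh u v) x (- (K + 1)) (K + 1)) by (eapply Hq_ge0; eauto; lra).
    unfold ind. destruct (excluded_middle_informative (I x)).
    + rewrite !Rmult_1_l. rewrite rpow_mult; auto. f_equal. unfold q0, rr; field.
    + rewrite !Rmult_0_l, !rpow_0. auto.
  - intros y Hy. destruct Hh as [_ [_ [_ Hs]]]. rewrite Hs; [ring | right; lra].
  - intros a b Hab. apply Riemann_integrable_scal. eapply iH_lem; eauto.
Qed.

Fixpoint ssum (f : nat -> R) (n : nat) : R :=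
  match n with O => 0 | S n' => ssum f n' + f n' end.

Lemma ssum_le f g n : (forall i, (i < n)%nat -> f i <= g i) -> ssum f n <= ssum g n.
Proof.
  induction n; simpl; intros H; [lra|].
  assert (ssum f n <= ssum g n) by (apply IHn; intros; apply H; lia).
  assert (f n <= g n) by (apply H; lia). lra.
Qed.
Lemma ssum_plus f g n : ssum (fun i => f i + g i) n = ssum f n + ssum g n.
Proof. induction n; simpl; [ring | rewrite IHn; ring]. Qed.
Lemma ssum_scal c f n : ssum (fun i => c * f i) n = c * ssum f n.
Proof. induction n; simpl; [ring | rewrite IHn; ring]. Qed.
Lemma ssum_ge0 f n : (forall i, 0 <= f i) -> 0 <= ssum f n.
Proof. induction n; simpl; intros H; [lra|]. specialize (IHn H). specialize (H n). lra. Qed.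
Lemma ssum_S f n : ssum f (S n) = ssum f n + f n.
Proof. reflexivity. Qed.
Lemma ssum_pair f n : ssum f (2 * n) = ssum (fun i => f (2 * i)%nat + f (S (2 * i))) n.
Proof.
  induction n; [simpl; auto|].
  replace (2 * S n)%nat with (S (S (2 * n))) by lia. rewrite !ssum_S, IHn. ring.
Qed.
Lemma ssum_ext f g n : (forall i, (i < n)%nat -> f i = g i) -> ssum f n = ssum g n.
Proof.
  induction n; simpl; intros H; auto. rewrite IHn by (intros; apply H; lia). rewrite H by lia. auto.
Qed.

Lemma ssum_pow_le sg f n : 1 <= sg -> (forall i, 0 <= f i) ->
  ssum (fun i => rpow (f i) sg) n <= rpow (ssum f n) sg.
Proof.
  intros Hs Hf. induction n; simpl.
  - rewrite rpow_0; lra.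
  - eapply Rle_trans; [apply Rplus_le_compat_r; exact IHn|]. apply superadd; auto.
    apply ssum_ge0; auto.
Qed.

Definition t0 g := (1 - g) / 2.
Definition kap g := g * (1 + t0 g).
Definition BB g := kap g / (1 - kap g).
Definition AA g s sg := (1 + BB g) * (1 + rpow 2 s / ((sg - 1) * rpow (t0 g) s)).

Lemma kap_bounds g : 0 < g < 1 -> 0 < kap g < 1.
Proof. intros H. unfold kap, t0. split; nra. Qed.
Arguments kap_bounds {g}.
Lemma BB_pos g : 0 < g < 1 -> 0 < BB g.
Proof. intros H. assert (K := kap_bounds H). unfold BB. apply Rdiv_lt_0_compat; lra. Qed.
Arguments BB_pos {g}.
Lemma BB_eq g : 0 < g < 1 -> (1 + BB g) * kap g = BB g.
Proof. intros H. assert (K := kap_bounds H). unfold BB. field. lra. Qed.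
Arguments BB_eq {g}.
Lemma t0_bounds g : 0 < g < 1 -> 0 < t0 g < 1.
Proof. intros H; unfold t0; lra. Qed.
Arguments t0_bounds {g}.
Lemma AA_ge g s sg : 0 < g < 1 -> 1 < sg -> 1 + BB g <= AA g s sg.
Proof.
  intros H Hs. assert (B := BB_pos H). assert (T := t0_bounds H).
  assert (0 < rpow (t0 g) s) by (apply rpow_gt0; lra). assert (0 < rpow 2 s) by (apply rpow_gt0; lra).
  assert (0 <= rpow 2 s / ((sg - 1) * rpow (t0 g) s)) by (left; apply Rdiv_lt_0_compat; nra).
  unfold AA. nra.
Qed.
Arguments AA_ge {g} s {sg}.
Lemma AA_eq g s sg : 0 < g < 1 -> 1 < sg ->
  AA g s sg * ((sg - 1) * rpow (t0 g) s) = (1 + BB g) * ((sg - 1) * rpow (t0 g) s + rpow 2 s).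
Proof.
  intros H Hs. assert (T := t0_bounds H).
  assert (0 < rpow (t0 g) s) by (apply rpow_gt0; lra).
  unfold AA. field. split; lra.
Qed.
Arguments AA_eq {g} s {sg}.

Lemma key_ord g s sg ro a a1 a2 m m1 m2 :
  0 < g < 1 -> 1 <= s -> 1 < sg -> 0 < ro -> ro * sg = s ->
  0 <= a2 <= a1 -> a1 <= m1 -> a2 <= m2 -> 0 <= a <= g * (a1 + a2) ->
  rpow m1 ro + rpow m2 ro <= rpow m ro -> 0 <= m ->
  rpow a s + (AA g s sg * rpow m1 s - BB g * rpow a1 s) + (AA g s sg * rpow m2 s - BB g * rpow a2 s)
  <= AA g s sg * rpow m s - BB g * rpow a s.
Proof.
  intros Hg Hs Hsg Hro Hrs Ha21 Ham1 Ham2 Ha Hsup Hm.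
  set (Ac := AA g s sg). set (B := BB g).
  assert (HB : 0 < B) by (apply BB_pos; auto).
  assert (HAc : 1 + B <= Ac) by (apply AA_ge; auto).
  set (X1 := rpow m1 ro). set (X2 := rpow m2 ro). set (X := rpow m ro).
  assert (E1 : rpow m1 s = rpow X1 sg) by (unfold X1; rewrite rpow_mult, Hrs; auto; lra).
  assert (E2 : rpow m2 s = rpow X2 sg) by (unfold X2; rewrite rpow_mult, Hrs; auto; lra).
  assert (E : rpow m s = rpow X sg) by (unfold X; rewrite rpow_mult, Hrs; auto; lra).
  assert (HX1 : 0 <= X1) by apply rpow_ge0. assert (HX2 : 0 <= X2) by apply rpow_ge0.
  assert (HXX : rpow (X1 + X2) sg <= rpow X sg). { apply rpow_le. lra. split. lra. exact Hsup. }
  set (G := rpow (X1 + X2) sg - rpow X1 sg - rpow X2 sg).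
  assert (HG : 0 <= G) by (unfold G; assert (S := superadd sg X1 X2 ltac:(lra) HX1 HX2); lra).
  assert (main : (1 + B) * rpow a s - B * rpow a1 s - B * rpow a2 s <= Ac * G).
  2:{ rewrite E1, E2, E. unfold G in main. nra. }
  assert (Ha1s : 0 <= rpow a1 s) by apply rpow_ge0. assert (Ha2s : 0 <= rpow a2 s) by apply rpow_ge0.
  assert (T := t0_bounds Hg). assert (K := kap_bounds Hg).
  destruct (Rle_dec a2 (t0 g * a1)) as [Hc|Hc].
  - assert (a <= kap g * a1) by (unfold kap; nra).
    assert (rpow a s <= kap g * rpow a1 s).
    { apply Rle_trans with (rpow (kap g * a1) s); [apply rpow_le; lra|].
      rewrite rpow_mul; [| lra | lra]. apply Rmult_le_compat_r; auto.
      apply pow_le_self; lra. }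
    assert (BE := BB_eq Hg). fold B in BE.
    assert ((1 + B) * rpow a s <= B * rpow a1 s) by (apply Rle_trans with ((1 + B) * (kap g * rpow a1 s)); [apply Rmult_le_compat_l; lra | rewrite <- Rmult_assoc, BE; lra]).
    assert (0 <= Ac * G) by (apply Rmult_le_pos; lra). nra.
  - assert (a <= 2 * a1) by nra.
    assert (A2 : rpow a s <= rpow 2 s * rpow a1 s).
    { rewrite <- rpow_mul; [| lra | lra]. apply rpow_le; lra. }
    assert (Ht : 0 <= t0 g * a1 <= a2) by nra.
    assert (L1 : rpow (t0 g * a1) ro <= Rmin X1 X2).
    { apply Rmin_glb.
      - apply Rle_trans with (rpow a1 ro); [apply rpow_le; [lra | split; nra] | apply rpow_le; [lra | split; lra]].
      - apply Rle_trans with (rpow a2 ro); [apply rpow_le; lra | apply rpow_le; [lra | split; lra]]. }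
    assert (L2 : (sg - 1) * rpow (Rmin X1 X2) sg <= G).
    { unfold Rmin. destruct (Rle_dec X1 X2).
      - assert (Hgm := gap_min sg X2 X1 ltac:(lra) HX2 HX1 r). unfold G. rewrite Rplus_comm. lra.
      - assert (Hgm := gap_min sg X1 X2 ltac:(lra) HX1 HX2 ltac:(lra)). unfold G. lra. }
    assert (L3 : rpow (t0 g) s * rpow a1 s <= rpow (Rmin X1 X2) sg).
    { rewrite <- rpow_mul; [| lra | lra]. rewrite <- Hrs, <- rpow_mult; [| nra].
      apply rpow_le; [lra|]. split; [apply rpow_ge0 | auto]. }
    assert (L4 : (sg - 1) * (rpow (t0 g) s * rpow a1 s) <= G) by nra.
    assert (Hts : 0 < rpow (t0 g) s) by (apply rpow_gt0; lra).
    assert (H2s : 0 < rpow 2 s) by (apply rpow_gt0; lra).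
    assert (AE := AA_eq s Hg Hsg). fold Ac B in AE.
    assert (Ac * ((sg - 1) * (rpow (t0 g) s * rpow a1 s)) <= Ac * G) by (apply Rmult_le_compat_l; lra).
    assert (Ac * ((sg - 1) * (rpow (t0 g) s * rpow a1 s)) = (1 + B) * ((sg - 1) * rpow (t0 g) s + rpow 2 s) * rpow a1 s).
    { rewrite <- AE. ring. }
    assert (0 <= (1 + B) * ((sg - 1) * rpow (t0 g) s) * rpow a1 s).
    { apply Rmult_le_pos; [apply Rmult_le_pos; nra | auto]. }
    nra.
Qed.

Lemma key g s sg ro a a1 a2 m m1 m2 :
  0 < g < 1 -> 1 <= s -> 1 < sg -> 0 < ro -> ro * sg = s ->
  0 <= a1 -> 0 <= a2 -> a1 <= m1 -> a2 <= m2 -> 0 <= a <= g * (a1 + a2) ->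
  rpow m1 ro + rpow m2 ro <= rpow m ro -> 0 <= m ->
  rpow a s + (AA g s sg * rpow m1 s - BB g * rpow a1 s) + (AA g s sg * rpow m2 s - BB g * rpow a2 s)
  <= AA g s sg * rpow m s - BB g * rpow a s.
Proof.
  intros. destruct (Rle_dec a2 a1).
  - apply key_ord with ro; auto; lra.
  - assert (H' := key_ord g s sg ro a a2 a1 m m2 m1 H H0 H1 H2 H3 ltac:(lra) H7 H6 ltac:(lra) ltac:(lra) H10).
    lra.
Qed.

Lemma phi_ge0 g s sg a m : 0 < g < 1 -> 1 <= s -> 1 < sg -> 0 <= a <= m ->
  rpow a s <= AA g s sg * rpow m s - BB g * rpow a s.
Proof.
  intros Hg Hs Hsg Ham. assert (HB := BB_pos Hg). assert (HA := AA_ge s Hg Hsg).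
  assert (rpow a s <= rpow m s) by (apply rpow_le; [lra | lra]).
  assert (0 <= rpow a s) by apply rpow_ge0. nra.
Qed.

Lemma pow2_ge1 j : (1 <= 2 ^ j)%nat.
Proof. induction j; simpl; lia. Qed.

Lemma layered g s sg ro (A Mu : Z -> Z -> R) K0 (N D : nat) Mtot :
  0 < g < 1 -> 1 <= s -> 1 < sg -> 0 < ro -> ro * sg = s ->
  (forall k m, 0 <= A k m /\ A k m <= Mu k m) ->
  (forall k m, A k m <= g * (A (k - 1)%Z (2 * m)%Z + A (k - 1)%Z (2 * m + 1)%Z)) ->
  (forall k m, rpow (Mu (k - 1)%Z (2 * m)%Z) ro + rpow (Mu (k - 1)%Z (2 * m + 1)%Z) ro <= rpow (Mu k m) ro) ->
  0 <= Mtot ->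
  ssum (fun i => rpow (Mu K0 (Z.of_nat i - Z.of_nat N)%Z) ro) (2 * N) <= rpow Mtot ro ->
  ssum (fun j => ssum (fun i => rpow (A (K0 - Z.of_nat j)%Z (Z.of_nat i - Z.of_nat (N * 2 ^ j))%Z) s) (2 * (N * 2 ^ j))) (S D)
   <= AA g s sg * rpow Mtot s.
Proof.
  intros Hg Hs Hsg Hro Hrs HA Hrec Hsup HM Hroot.
  set (Ac := AA g s sg). set (B := BB g).
  set (Phi := fun k m => Ac * rpow (Mu k m) s - B * rpow (A k m) s).
  set (Cl := fun j => ssum (fun i => rpow (A (K0 - Z.of_nat j)%Z (Z.of_nat i - Z.of_nat (N * 2 ^ j))%Z) s) (2 * (N * 2 ^ j))).
  set (Pl := fun j => ssum (fun i => Phi (K0 - Z.of_nat j)%Z (Z.of_nat i - Z.of_nat (N * 2 ^ j))%Z) (2 * (N * 2 ^ j))).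
  assert (HMu : forall k m, 0 <= Mu k m) by (intros k m; destruct (HA k m); lra).
  assert (Phi0 : forall k m, rpow (A k m) s <= Phi k m).
  { intros k m. unfold Phi, Ac, B. apply phi_ge0; auto. }
  assert (Pl0 : forall j, 0 <= Pl j).
  { intros j. unfold Pl. apply ssum_ge0. intros i. eapply Rle_trans; [apply rpow_ge0 | apply Phi0]. }
  assert (step : forall j, Cl j + Pl (S j) <= Pl j).
  { intros j. unfold Cl, Pl.
    replace (2 * (N * 2 ^ S j))%nat with (2 * (2 * (N * 2 ^ j)))%nat by (simpl; lia).
    rewrite (ssum_pair _ (2 * (N * 2 ^ j))), <- ssum_plus. apply ssum_le. intros i Hi.
    set (k := (K0 - Z.of_nat j)%Z). set (m := (Z.of_nat i - Z.of_nat (N * 2 ^ j))%Z).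
    replace (K0 - Z.of_nat (S j))%Z with (k - 1)%Z by (unfold k; lia).
    replace (Z.of_nat (2 * i) - Z.of_nat (N * 2 ^ S j))%Z with (2 * m)%Z.
    2:{ unfold m. replace (N * 2 ^ S j)%nat with (2 * (N * 2 ^ j))%nat by (simpl; lia). lia. }
    replace (Z.of_nat (S (2 * i)) - Z.of_nat (N * 2 ^ S j))%Z with (2 * m + 1)%Z.
    2:{ unfold m. replace (N * 2 ^ S j)%nat with (2 * (N * 2 ^ j))%nat by (simpl; lia). lia. }
    unfold Phi, Ac, B.
    assert (K := key g s sg ro (A k m) (A (k - 1)%Z (2 * m)%Z) (A (k - 1)%Z (2 * m + 1)%Z)
                    (Mu k m) (Mu (k - 1)%Z (2 * m)%Z) (Mu (k - 1)%Z (2 * m + 1)%Z) Hg Hs Hsg Hro Hrs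
                    (proj1 (HA _ _)) (proj1 (HA _ _)) (proj2 (HA _ _)) (proj2 (HA _ _))
                    (conj (proj1 (HA _ _)) (Hrec k m)) (Hsup k m) (HMu k m)).
    lra. }
  assert (ind : forall d j, ssum (fun t => Cl (j + t)%nat) (S d) + Pl (j + S d)%nat <= Pl j).
  { induction d; intros j.
    - simpl. replace (j + 0)%nat with j by lia. replace (j + 1)%nat with (S j) by lia.
      assert (H := step j). lra.
    - rewrite ssum_S. assert (IH := IHd j). assert (H := step (j + S d)%nat).
      replace (j + S (S d))%nat with (S (j + S d)) by lia. lra. }
  assert (E0 := ind D 0%nat). change (ssum (fun t => Cl t) (S D) + Pl (S D) <= Pl 0%nat) in E0.
  change (ssum (fun j => Cl j) (S D) <= Ac * rpow Mtot s).
  assert (Hs0 : ssum (fun j => Cl j) (S D) <= Pl 0%nat) by (assert (H := Pl0 (S D)); lra).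
  eapply Rle_trans; [exact Hs0|].
  unfold Pl. replace (K0 - Z.of_nat 0)%Z with K0 by lia.
  replace (N * 2 ^ 0)%nat with N by (simpl; lia).
  apply Rle_trans with (ssum (fun i => Ac * rpow (rpow (Mu K0 (Z.of_nat i - Z.of_nat N)%Z) ro) sg) (2 * N)).
  { apply ssum_le. intros i _. unfold Phi. rewrite rpow_mult, Hrs; [| auto].
    assert (0 <= rpow (A K0 (Z.of_nat i - Z.of_nat N)%Z) s) by apply rpow_ge0.
    assert (0 < B) by (apply BB_pos; auto). nra. }
  rewrite ssum_scal. assert (0 < Ac). { assert (H := AA_ge s Hg Hsg). assert (H2 := BB_pos Hg). unfold Ac. lra. }
  apply Rmult_le_compat_l; [lra|].
  eapply Rle_trans; [apply ssum_pow_le; [lra | intros; apply rpow_ge0]|].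
  rewrite <- Hrs, <- rpow_mult; auto. apply rpow_le; [lra|]. split; [apply ssum_ge0; intros; apply rpow_ge0 | auto].
Qed.

Definition sumL {T} (g : T -> R) (l : list T) := fold_right Rplus 0 (map g l).

Lemma sumL_app {T} (g : T -> R) l1 l2 : sumL g (l1 ++ l2) = sumL g l1 + sumL g l2.
Proof. unfold sumL. induction l1; simpl; [ring|]. rewrite IHl1; ring. Qed.

Lemma sumL_cons {T} (g : T -> R) a l : sumL g (a :: l) = g a + sumL g l.
Proof. reflexivity. Qed.

Lemma sumL_map {T U} (g : U -> R) (F : T -> U) l : sumL g (map F l) = sumL (fun x => g (F x)) l.
Proof. unfold sumL. rewrite map_map. reflexivity. Qed.

Lemma sumL_seq f n : sumL f (seq 0 n) = ssum f n.
Proof. induction n; [reflexivity|]. rewrite seq_S, sumL_app, IHn. simpl. unfold sumL; simpl. ring. Qed.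

Lemma sumL_flat_map {T U} (g : U -> R) (F : T -> list U) l : sumL g (flat_map F l) = sumL (fun x => sumL g (F x)) l.
Proof. induction l; [reflexivity|]. simpl. rewrite sumL_app, IHl. reflexivity. Qed.

Lemma sumL_le {T} (f g : T -> R) l : (forall x, In x l -> f x <= g x) -> sumL f l <= sumL g l.
Proof.
  induction l; intros H; [unfold sumL; simpl; lra|]. rewrite !sumL_cons.
  assert (f a <= g a) by (apply H; left; auto). assert (sumL f l <= sumL g l) by (apply IHl; intros; apply H; right; auto). lra.
Qed.

Lemma sumL_plus {T} (f g : T -> R) l : sumL (fun x => f x + g x) l = sumL f l + sumL g l.
Proof. induction l; [unfold sumL; simpl; ring|]. rewrite !sumL_cons, IHl. ring. Qed.
Lemma sumL_scal {T} c (f : T -> R) l : sumL (fun x => c * f x) l = c * sumL f l.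
Proof. induction l; [unfold sumL; simpl; ring|]. rewrite !sumL_cons, IHl. ring. Qed.
Lemma sumL_ge0 {T} (f : T -> R) l : (forall x, 0 <= f x) -> 0 <= sumL f l.
Proof. induction l; intros H; [unfold sumL; simpl; lra|]. rewrite sumL_cons. specialize (IHl H). specialize (H a). lra. Qed.

Lemma sum_sub {T} (g : T -> R) (L : list T) : NoDup L -> forall B, (forall x, In x L -> In x B) -> (forall x, 0 <= g x) ->
  sumL g L <= sumL g B.
Proof.
  induction L as [|a L IH]; intros HN B HB Hg.
  - unfold sumL; simpl. apply sumL_ge0; auto.
  - inversion HN as [|a' L' Ha HN']; subst.
    destruct (in_split a B) as [B1 [B2 EB]]; [apply HB; left; auto|]. subst B.
    rewrite sumL_cons, sumL_app, sumL_cons.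
    assert (sumL g L <= sumL g (B1 ++ B2)).
    { apply IH; auto. intros x Hx. assert (In x (B1 ++ a :: B2)) by (apply HB; right; auto).
      apply in_app_or in H. apply in_or_app. destruct H as [H|[H|H]]; auto. subst; contradiction. }
    rewrite sumL_app in H. lra.
Qed.

Lemma bounds (L : list (Z * Z)) : exists K0 Kmin (N : nat), (1 <= N)%nat /\
  forall k n, In (k, n) L -> (Kmin <= k <= K0)%Z /\ (- Z.of_nat N + 1 <= n <= Z.of_nat N - 1)%Z.
Proof.
  induction L as [|[k n] L IH].
  - exists 0%Z, 0%Z, 1%nat. split; [lia|]. intros k n [].
  - destruct IH as [K0 [Kmin [N [HN H]]]].
    exists (Z.max K0 k), (Z.min Kmin k), (N + Z.to_nat (Z.abs n) + 1)%nat. split; [lia|].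
    intros k' n' [E|Hin].
    + inversion E; subst. lia.
    + destruct (H k' n' Hin). lia.
Qed.

Definition box (K0 : Z) (N D : nat) : list (Z * Z) :=
  flat_map (fun j => map (fun i => (K0 - Z.of_nat j, Z.of_nat i - Z.of_nat (N * 2 ^ j))%Z) (seq 0 (2 * (N * 2 ^ j)))) (seq 0 (S D)).

Lemma in_box K0 N D k m : (K0 - Z.of_nat D <= k <= K0)%Z -> (- Z.of_nat N <= m <= Z.of_nat N - 1)%Z ->
  In (k, m) (box K0 N D).
Proof.
  intros Hk Hm. unfold box. apply in_flat_map. exists (Z.to_nat (K0 - k)). split.
  - apply in_seq. lia.
  - apply in_map_iff. set (j := Z.to_nat (K0 - k)). assert (H1 := pow2_ge1 j).
    assert (HX : (N <= N * 2 ^ j)%nat) by nia. set (X := (N * 2 ^ j)%nat) in *.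
    exists (Z.to_nat (m + Z.of_nat X)). split.
    + f_equal; [unfold j; lia | clearbody X; lia].
    + apply in_seq. lia.
Qed.

Lemma sum_box f K0 N D : sumL f (box K0 N D) =
  ssum (fun j => ssum (fun i => f (K0 - Z.of_nat j, Z.of_nat i - Z.of_nat (N * 2 ^ j))%Z) (2 * (N * 2 ^ j))) (S D).
Proof.
  unfold box. rewrite sumL_flat_map, sumL_seq. apply ssum_ext. intros j _.
  rewrite sumL_map, sumL_seq. reflexivity.
Qed.

Lemma gam_bounds : 0 < rpow 2 (rr - 1) < 1.
Proof.
  split; [apply rpow_gt0; lra|]. rewrite rpow_pos; [|lra]. unfold Rpower.
  apply Rlt_le_trans with (exp 0); [apply exp_increasing | rewrite exp_0; lra]. assert (H := ln_lt_2). unfold rr. nra.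
Qed.

Lemma aY_split h K I p0 mid q l : hyp h K -> is_interval I -> 0 < l -> mid = p0 + l -> q = mid + l ->
  aY h I p0 q = rpow 2 (rr - 1) * (aY h I p0 mid + aY h I mid q).
Proof.
  intros Hh HI Hl E1 E2. unfold aY.
  rewrite (ee_add Hh HI (b := mid)); [| lra | lra].
  replace (q - p0) with (2 * l) by lra. replace (mid - p0) with l by lra. replace (q - mid) with l by lra.
  rewrite rpow_mul; [ring | lra | lra].
Qed.

Lemma P_half k m : powerRZ 2 (k - 1) * IZR (2 * m) = powerRZ 2 k * IZR m.
Proof.
  replace k with ((k - 1) + 1)%Z at 2 by lia. rewrite powerRZ_add; [| lra].
  rewrite mult_IZR. simpl. ring.
Qed.

Lemma mu_ext h K I a b : hyp h K -> is_interval I -> a <= - (K + 1) -> K + 1 <= b ->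
  mu h I a b = mu h I (- (K + 1)) (K + 1).
Proof.
  intros Hh HI Ha Hb. unfold mu. f_equal. apply functional_extensionality; intros x. f_equal.
  assert (HK : 0 <= K) by apply Hh.
  rewrite <- (Hq_add x a (- (K + 1)) b Hh), <- (Hq_add x (- (K + 1)) (K + 1) b Hh).
  unfold Hq. destruct Hh as [_ [_ [_ Hs]]].
  rewrite (RInt_zero_fun (f := fun y => h x y) (a := a) (b := - (K + 1))); [| lra |].
  2:{ intros y Hy. apply Hs. right. unfold Rabs; destruct (Rcase_abs y); lra. }
  rewrite (RInt_zero_fun (f := fun y => h x y) (a := K + 1) (b := b)); [ring | lra |].
  intros y Hy. apply Hs. right. unfold Rabs; destruct (Rcase_abs y); lra.
Qed.

Lemma chain h K I (t : nat -> R) n : hyp h K -> is_interval I -> (forall i, t i <= t (S i)) ->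
  ssum (fun i => rpow (mu h I (t i) (t (S i))) (/ rr)) n <= rpow (mu h I (t 0%nat) (t n)) (/ rr).
Proof.
  intros Hh HI Ht. induction n.
  - simpl. apply rpow_ge0.
  - rewrite ssum_S. eapply Rle_trans; [apply Rplus_le_compat_r; exact IHn|].
    eapply mu_super; eauto. clear IHn. induction n; [lra|]. specialize (Ht n); lra.
Qed.

Lemma dyad_term_eq p u v I K k n : hyp (hh u v) K -> is_interval I -> 0 < p ->
  dyad_term p u v I (k, n) =
  rpow (aY (hh u v) I (powerRZ 2 k * (IZR n - 1)) (powerRZ 2 k * (IZR n + 1))) (p / q0).
Proof.
  intros Hh HI Hp. unfold dyad_term. simpl fst; simpl snd.
  rewrite (norm_IJ_eq u v I K k n Hh HI). unfold aY.
  set (al := powerRZ 2 k * (IZR n - 1)). set (be := powerRZ 2 k * (IZR n + 1)).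
  assert (Hk := pow2_pos k).
  assert (Hab : al <= be) by (unfold al, be; nra).
  assert (He : 0 <= ee (hh u v) I al be) by (eapply ee_ge0; eauto).
  rewrite rpow_mul; [| apply rpow_ge0 | auto]. rewrite rpow_mult; auto. rewrite rpow_mult; [| unfold al, be; nra].
  replace (be - al) with (dyad_len k) by (unfold dyad_len, al, be; ring).
  f_equal; f_equal; unfold rr, q0; field.
Qed.

Lemma pk2 k : powerRZ 2 k = 2 * powerRZ 2 (k - 1).
Proof.
  replace k with ((k - 1) + 1)%Z at 1 by lia. rewrite powerRZ_add; [| lra]. simpl. ring.
Qed.

Theorem mainTheorem9 :
  forall p : R, 2 < p ->
  exists C : R, 0 < C /\
    forall (I : R -> Prop) (u v : R -> R -> R),
      is_interval I ->
      smooth2 u -> smooth2 v -> compact_support2 u -> compact_support2 v ->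
      forall L : list (Z * Z), NoDup L ->
        fold_right Rplus 0 (map (dyad_term p u v I) L)
          <= C * rpow (norm_mixed u v I) p.
Proof.
  intros p Hp.
  set (s := p / q0). set (sg := s * rr). set (ro := / rr). set (g := rpow 2 (rr - 1)).
  assert (Es : s = 11 * p / 20) by (unfold s, q0; field).
  assert (Hs : 1 <= s) by (rewrite Es; lra).
  assert (Esg : sg = p / 2) by (unfold sg; rewrite Es; unfold rr; field).
  assert (Hsg : 1 < sg) by (rewrite Esg; lra).
  assert (Hro : 0 < ro) by (unfold ro, rr; lra).
  assert (Hrs : ro * sg = s) by (unfold ro, sg, rr; field).
  assert (Hg := gam_bounds). fold g in Hg.
  exists (rpow 2 s * 2 * AA g s sg). split.
  { assert (H1 := AA_ge s Hg Hsg). assert (H2 := BB_pos Hg). assert (H3 : 0 < rpow 2 s) by (apply rpow_gt0; lra).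
    nra. }
  intros I u v HI su sv cu cv L HN.
  destruct (setup u v su sv cu cv) as [K Hh].
  assert (HK : 0 <= K) by apply Hh.
  set (h := hh u v) in *.
  set (A := fun k m => aY h I (powerRZ 2 k * IZR m) (powerRZ 2 k * IZR (m + 1))).
  set (Mu := fun k m => mu h I (powerRZ 2 k * IZR m) (powerRZ 2 k * IZR (m + 1))).
  set (f := fun kn : Z * Z => rpow (A (fst kn) (snd kn)) s).
  destruct (bounds L) as [K0 [Kmin [N [HN1 HB]]]].
  set (D := Z.to_nat (K0 - Kmin)).
  set (Mtot := mu h I (- (K + 1)) (K + 1)).
  assert (Ilt : forall k m, powerRZ 2 k * IZR m < powerRZ 2 k * IZR (m + 1)).
  { intros k m. rewrite plus_IZR. assert (H := pow2_pos k). nra. }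
  assert (HAm : forall k m, 0 <= A k m /\ A k m <= Mu k m).
  { intros k m. unfold A, Mu. split.
    - unfold aY. apply Rmult_le_pos; [apply rpow_ge0|]. eapply ee_ge0; eauto. left; apply Ilt.
    - eapply aY_le_mu; eauto. }
  assert (Ends : forall k m, powerRZ 2 (k - 1) * IZR (2 * m) = powerRZ 2 k * IZR m /\
            powerRZ 2 (k - 1) * IZR (2 * m + 1 + 1) = powerRZ 2 k * IZR (m + 1) /\
            powerRZ 2 (k - 1) * IZR (2 * m + 1) = powerRZ 2 k * IZR m + powerRZ 2 (k - 1) /\
            powerRZ 2 k * IZR (m + 1) = powerRZ 2 k * IZR m + powerRZ 2 (k - 1) + powerRZ 2 (k - 1)).
  { intros k m. rewrite (pk2 k). rewrite !plus_IZR, !mult_IZR. simpl. repeat split; ring. }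
  assert (Hrec : forall k m, A k m <= g * (A (k - 1)%Z (2 * m)%Z + A (k - 1)%Z (2 * m + 1)%Z)).
  { intros k m. unfold A. destruct (Ends k m) as [E1 [E2 [E3 E4]]].
    replace (2 * m + 1 + 1)%Z with (2 * m + 1 + 1)%Z by lia. rewrite E1, E2, E3.
    right. apply (aY_split h K I _ _ _ (powerRZ 2 (k - 1))); auto. all: try apply pow2_pos. all: try (rewrite E4; ring). }
  assert (Hsup : forall k m, rpow (Mu (k - 1)%Z (2 * m)%Z) ro + rpow (Mu (k - 1)%Z (2 * m + 1)%Z) ro <= rpow (Mu k m) ro).
  { intros k m. unfold Mu. destruct (Ends k m) as [E1 [E2 [E3 E4]]]. rewrite E1, E2, E3.
    assert (H := pow2_pos (k - 1)).
    unfold ro. eapply mu_super; eauto; lra. }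
  assert (HMt : 0 <= Mtot) by (unfold Mtot; eapply mu_ge0; eauto; lra).
  assert (Hroot : ssum (fun i => rpow (Mu K0 (Z.of_nat i - Z.of_nat N)%Z) ro) (2 * N) <= rpow Mtot ro).
  { set (t := fun i : nat => powerRZ 2 K0 * IZR (Z.of_nat i - Z.of_nat N)).
    assert (Ht : forall i, t i <= t (S i)).
    { intros i. unfold t. rewrite !minus_IZR. rewrite <- !INR_IZR_INZ. rewrite S_INR.
      assert (H := pow2_pos K0). nra. }
    apply Rle_trans with (ssum (fun i => rpow (mu h I (t i) (t (S i))) (/ rr)) (2 * N)).
    { right. apply ssum_ext. intros i _. unfold Mu, t, ro. do 3 f_equal. f_equal. lia. }
    eapply Rle_trans; [eapply chain; eauto|].
    assert (T0 : t 0%nat <= t (2 * N)%nat).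
    { clear -Ht. induction (2 * N)%nat; [lra|]. specialize (Ht n); lra. }
    apply rpow_le; [left; first [exact Hro | apply Rinv_0_lt_compat; unfold rr; lra] |]. split; [eapply mu_ge0; eauto|].
    unfold Mtot. rewrite <- (mu_ext h K I (Rmin (t 0%nat) (- (K + 1))) (Rmax (t (2 * N)%nat) (K + 1)) Hh HI); [| apply Rmin_r | apply Rmax_r].
    eapply mu_mono; eauto; [apply Rmin_l | apply Rmax_l]. }
  assert (Hlay := layered g s sg ro A Mu K0 N D Mtot Hg Hs Hsg Hro Hrs HAm Hrec Hsup HMt Hroot).
  assert (SB : sumL f (box K0 N D) <= AA g s sg * rpow Mtot s) by (rewrite sum_box; exact Hlay).
  assert (Hf0 : forall x, 0 <= f x) by (intros; apply rpow_ge0).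
  set (sh := fun kn : Z * Z => (fst kn, (snd kn - 1)%Z)).
  assert (LHS : fold_right Rplus 0 (map (dyad_term p u v I) L) <= rpow 2 s * (sumL f (map sh L) + sumL f L)).
  { change (fold_right Rplus 0 (map (dyad_term p u v I) L)) with (sumL (dyad_term p u v I) L).
    rewrite sumL_map, <- sumL_plus, <- sumL_scal. apply sumL_le. intros [k n] Hin.
    rewrite (dyad_term_eq p u v I K k n Hh HI ltac:(lra)). fold s. fold h.
    unfold f, sh; simpl fst; simpl snd.
    set (a1 := A k (n - 1)%Z). set (a2 := A k n).
    assert (Esp : aY h I (powerRZ 2 k * (IZR n - 1)) (powerRZ 2 k * (IZR n + 1)) = g * (a1 + a2)).
    { unfold a1, a2, A. replace (IZR (n - 1)) with (IZR n - 1) by (rewrite minus_IZR; ring).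
      replace (IZR (n - 1 + 1)) with (IZR n) by (f_equal; lia). rewrite plus_IZR.
      apply (aY_split h K I _ _ _ (powerRZ 2 k)); auto. all: try apply pow2_pos. all: try ring. }
    rewrite Esp.
    assert (H1 : 0 <= a1) by (apply HAm). assert (H2 : 0 <= a2) by (apply HAm).
    apply Rle_trans with (rpow (a1 + a2) s).
    - apply rpow_le; [lra|]. split; [apply Rmult_le_pos; lra | nra].
    - apply sum_pow_le2; lra. }
  assert (NDsh : NoDup (map sh L)).
  { apply Injective_map_NoDup; auto. intros [k1 n1] [k2 n2] E. unfold sh in E; simpl in E.
    injection E; intros; f_equal; lia. }
  assert (Dk : forall k, (Kmin <= k)%Z -> (K0 - Z.of_nat D <= k)%Z) by (intros; unfold D; lia).
  assert (S1 : sumL f (map sh L) <= sumL f (box K0 N D)).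
  { apply sum_sub; auto. intros x Hx. apply in_map_iff in Hx. destruct Hx as [[k n] [Ex Hin]].
    subst x. unfold sh; simpl. destruct (HB k n Hin). apply in_box; [split; [apply Dk|]|]; lia. }
  assert (S2 : sumL f L <= sumL f (box K0 N D)).
  { apply sum_sub; auto. intros [k n] Hin. destruct (HB k n Hin). apply in_box; [split; [apply Dk|]|]; lia. }
  rewrite (norm_mixed_eq u v I K Hh HI). fold h. fold Mtot.
  rewrite rpow_mult; auto. replace (1 / q0 * p) with s by (unfold s; field; unfold q0; lra).
  assert (0 < rpow 2 s) by (apply rpow_gt0; lra).
  apply Rle_trans with (rpow 2 s * (2 * (AA g s sg * rpow Mtot s))); [|right; ring].
  eapply Rle_trans; [exact LHS|]. apply Rmult_le_compat_l; lra.
Qed.
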